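(* ($\mathsf{Idx}$-normalization.) Let $\mathtt E$ be a closed term with $\vdash\mathtt E:\mathsf{Idx}$ derivable. (1) $\mathtt E\Downarrow^1\underline n$ for some numeral $\underline n$. (2) If $\mathsf{Circ}(\mathtt E)$ occurs in a valid type derivation, then $\mathtt E\Downarrow^1\underline n$ for some numeral $\underline n$.
   Context: qPCF. Gates: $\mathcal U=\bigcup_k\mathcal U(k)$, $\mathtt U\in\mathcal U(k)$ acts on $k+1$ qubits; $\ddagger$ is a fixed total arity-preserving map on gate names. Raw terms: $\mathtt{M},\mathtt{N},\mathtt{P},\mathtt{Q},\mathtt{E}::=\mathtt{x}\mid\lambda\mathtt{x}^\sigma.\mathtt{M}\mid\mathtt{M}\mathtt{N}\mid\underline{n}\mid\mathtt{pred}\mid\mathtt{succ}\mid\mathtt{if}\mid\mathtt{Y}_\sigma\mid\mathtt{set}\mid\mathtt{get}\mid\mathtt{U}\mid{::}\mid{\parallel}\mid\mathtt{iter}\mid\mathtt{reverse}\mid\odot\mathtt{E}\mathtt{E}'\ (\odot\in\{+,*\})\mid\mathtt{size}\mid\mathtt{dMeas}$, with infix $::$, $\parallel$, $+$. Types $\sigma::=\mathsf{Nat}\mid\mathsf{Idx}\mid\mathsf{Circ}(\mathtt E)\mid\Pi\mathtt x^\sigma.\tau$; $\sigma\to\tau$ is a non-dependent $\Pi$. Bases $B$: finite variable-to-type assignments with distinct variables. $\mathrm{sC}(B,\mathsf{Nat})=\mathrm{sC}(B,\mathsf{Idx})=\emptyset$, $\mathrm{sC}(B,\mathsf{Circ}(\mathtt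 E))=\{B\vdash\mathtt E:\mathsf{Idx}\}$, $\mathrm{sC}(B,\Pi\mathtt x^\sigma.\tau)=\mathrm{sC}(B,\sigma)\cup\mathrm{sC}(B\cup\{\mathtt x:\sigma\},\tau)$, extended to sets by union; $\mathrm{WF}(B,S)$ means all typings in $\mathrm{sC}(B,S)$ are derivable. Typing rules: (P0) $\mathrm{WF}(B,\mathrm{codom}(B)\cup\{\sigma\})\Rightarrow B\cup\{\mathtt x:\sigma\}\vdash\mathtt x:\sigma$; (P1) $B\cup\{\mathtt x:\sigma\}\vdash\mathtt N:\tau\Rightarrow B\vdash\lambda\mathtt x^\sigma.\mathtt N:\Pi\mathtt x^\sigma.\tau$; (P2) $B\vdash\mathtt P:\Pi\mathtt x^\sigma.\tau$, $B\vdash\mathtt Q:\sigma\Rightarrow B\vdash\mathtt{PQ}:\tau[\mathtt Q/\mathtt x]$; given $\mathrm{WF}(B,\mathrm{codom}(B))$: $\mathtt{succ},\mathtt{pred}:\mathsf{Nat}\to\mathsf{Nat}$, $\mathtt{if}:\mathsf{Nat}\to\mathsf{Nat}\to\mathsf{Nat}\to\mathsf{Nat}$, $\mathtt{get},\mathtt{set}:\mathsf{Nat}\to\mathsf{Nat}\to\mathsf{Nat}$, $\underline n:\mathsf{Idx}$, $\mathtt U:\mathsf{Circ}(\underline k)$ for $\mathtt U\in\mathcal U(k)$; (P5') $B\vdash\mathtt E:\mathsf{Idx}\Rightarrow B\vdash\mathtt{if}:\mathsf{Nat}\to\mathsf{Circ}(\mathtt E)\to\mathsf{Circ}(\mathtt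 E)\to\mathsf{Circ}(\mathtt E)$; (P6) $\sigma=\tau_1\to\cdots\to\tau_n\to\gamma$, $\gamma\in\{\mathsf{Nat},\mathsf{Circ}(\mathtt E)\}$, $\mathrm{WF}(B,\mathrm{codom}(B)\cup\{\sigma\})\Rightarrow B\vdash\mathtt Y_\sigma:(\sigma\to\sigma)\to\sigma$; (I0) $B\vdash\mathtt M:\mathsf{Idx}\Rightarrow B\vdash\mathtt M:\mathsf{Nat}$; (I2) $B\vdash\mathtt E_0,\mathtt E_1:\mathsf{Idx}\Rightarrow B\vdash\odot\mathtt E_0\mathtt E_1:\mathsf{Idx}$; (I3) $B\vdash\mathtt M:\mathsf{Circ}(\mathtt E)\Rightarrow B\vdash\mathtt{size}\,\mathtt M:\mathsf{Idx}$; given $B\vdash\mathtt E,\mathtt E_0,\mathtt E_1:\mathsf{Idx}$: ${::}:\mathsf{Circ}(\mathtt E)\to\mathsf{Circ}(\mathtt E)\to\mathsf{Circ}(\mathtt E)$, ${\parallel}:\mathsf{Circ}(\mathtt E_0)\to\mathsf{Circ}(\mathtt E_1)\to\mathsf{Circ}(\mathtt E_0+\mathtt E_1+\underline1)$, $\mathtt{reverse}:\mathsf{Circ}(\mathtt E)\to\mathsf{Circ}(\mathtt E)$, $\mathtt{iter}:\Pi\mathtt x^{\mathsf{Idx}}.\mathsf{Circ}(\mathtt E_0)\to\mathsf{Circ}(\mathtt E_1)\to\mathsf{Circ}(\mathtt E_0+((\underline1+\mathtt E_1)*\mathtt x))$, $\mathtt{dMeas}:\mathsf{Nat}\to\mathsf{Circ}(\mathtt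 E)\to\mathsf{Nat}$. Types are identified modulo $\alpha$, $\beta$-convertibility of terms in types, and ring laws of $+,*$ with $0,1$. A valid type derivation is a finite derivation built with these rules. Evaluation $\mathtt M\Downarrow^\alpha\mathtt V$ ($\mathtt M$ closed of ground type, $0<\alpha\le1$, $\mathtt V$ a numeral or a term built from gate names with $::,\parallel$) is the big-step call-by-name relation: $\underline n\Downarrow^1\underline n$; $\mathtt{succ}$/$\mathtt{pred}$ evaluate their argument and add/subtract one; $(\lambda\mathtt x.\mathtt M)\mathtt N\vec{\mathtt P}\Downarrow^\alpha\mathtt V$ if $\mathtt M[\mathtt N/\mathtt x]\vec{\mathtt P}\Downarrow^\alpha\mathtt V$; $\mathtt{if}\,\mathtt M\mathtt L\mathtt R\Downarrow^{\alpha\alpha'}\mathtt V$ if $\mathtt M\Downarrow^\alpha\underline0,\mathtt L\Downarrow^{\alpha'}\mathtt V$ or $\mathtt M\Downarrow^\alpha\underline{n+1},\mathtt R\Downarrow^{\alpha'}\mathtt V$; $\mathtt Y\mathtt M\vec{\mathtt P}\Downarrow^\alpha\mathtt V$ if $\mathtt M(\mathtt Y\mathtt M)\vec{\mathtt P}\Downarrow^\alpha\mathtt V$; $\mathtt{size}\,\mathtt M\Downarrow^\alpha\underline n$ if $\vdash\mathtt M:\mathsf{Circ}(\mathtt E)$ and $\mathtt E\Downarrow^\alpha\underline n$; $\odot\mathtt E_0\mathtt E_1\Downarrow^{\alpha\alpha'}\underline{m\odot n}$ if $\mathtt E_0\Downarrow^\alpha\underline m,\mathtt E_1\Downarrow^{\alpha'}\underline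 n$; $\mathtt{get}\,\mathtt M\mathtt N$ / $\mathtt{set}\,\mathtt M\mathtt N$ evaluate both arguments to $\underline m,\underline n$ (probabilities multiplied) and return the $n$-th binary digit of $m$ / $m$ with that digit set to $1$; $\mathtt U\Downarrow^\alpha\mathtt U$; $::$, $\parallel$ evaluate components; $\mathtt{reverse}$ replaces gates by their $\ddagger$-image and reverses sequential order; $\mathtt{iter}\,\mathtt E\mathtt M_0\mathtt M_1\Downarrow\mathtt C_1\parallel\cdots\parallel\mathtt C_1\parallel\mathtt C_0$ ($n$ copies, $\mathtt E\Downarrow\underline n$); $\mathtt{dMeas}\,\mathtt M\mathtt N\Downarrow^{\alpha\alpha'\alpha''}\underline n$ if $\mathtt M\Downarrow^\alpha\underline m$, $\mathtt N\Downarrow^{\alpha'}\mathtt C$, $\vdash\mathtt N:\mathsf{Circ}(\underline k)$ and $\underline n$ is a quantum measurement outcome of the circuit $\mathtt C$ on input $m$, obtained with probability $\alpha''$. *)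

(* Defs.v *)
From Stdlib Require Import List Arith PeanoNat Reals Permutation Relations.
Import ListNotations.

(* Bound variables are de Bruijn indices (BVar), free variables are    *)
(* names (FVar x, x : nat); hence alpha-equivalence is syntactic eq.   *)

Inductive op : Type := OPlus | OTimes.

Definition opfun (o : op) : nat -> nat -> nat :=
  match o with OPlus => Nat.add | OTimes => Nat.mul end.

Inductive term (G : Type) : Type :=
| BVar : nat -> term G
| FVar : nat -> term G
| Lam : ty G -> term G -> term G
| App : term G -> term G -> term G
| Num : nat -> term G
| Pred : term G
| Succ : term G
| If : term G
| Yc : ty G -> term G
| SetB : term G
| GetB : term G
| Gate : G -> term G
| Seq : term G
| Par : term G
| Iter : term G
| Reverse : term G
| Op : op -> term G -> term G -> term G
| Size : term G
| DMeas : term G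
with ty (G : Type) : Type :=
| TNat : ty G
| TIdx : ty G
| TCirc : term G -> ty G
| TPi : ty G -> ty G -> ty G.             (* Pi x^sigma. tau (tau binds index 0) *)

Arguments BVar {G}. Arguments FVar {G}. Arguments Lam {G}. Arguments App {G}.
Arguments Num {G}. Arguments Pred {G}. Arguments Succ {G}. Arguments If {G}.
Arguments Yc {G}. Arguments SetB {G}. Arguments GetB {G}. Arguments Gate {G}.
Arguments Seq {G}. Arguments Par {G}. Arguments Iter {G}. Arguments Reverse {G}.
Arguments Op {G}. Arguments Size {G}. Arguments DMeas {G}.
Arguments TNat {G}. Arguments TIdx {G}. Arguments TCirc {G}. Arguments TPi {G}.

Definition Arr {G : Type} (a b : ty G) : ty G := TPi a b.

Fixpoint open_t {G : Type} (k : nat) (u : term G) (t : term G) : term G :=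
  match t with
  | BVar i => if Nat.eqb i k then u else BVar i
  | Lam s M => Lam (open_ty k u s) (open_t (S k) u M)
  | App M N => App (open_t k u M) (open_t k u N)
  | Yc s => Yc (open_ty k u s)
  | Op o a b => Op o (open_t k u a) (open_t k u b)
  | t => t
  end
with open_ty {G : Type} (k : nat) (u : term G) (s : ty G) : ty G :=
  match s with
  | TCirc E => TCirc (open_t k u E)
  | TPi a b => TPi (open_ty k u a) (open_ty (S k) u b)
  | s => s
  end.

Fixpoint fv_t {G : Type} (t : term G) : list nat :=
  match t with
  | FVar x => [x]
  | Lam s M => fv_ty s ++ fv_t M
  | App M N => fv_t M ++ fv_t N
  | Yc s => fv_ty s
  | Op _ a b => fv_t a ++ fv_t b
  | _ => []
  end
with fv_ty {G : Type} (s : ty G) : list nat :=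
  match s with
  | TCirc E => fv_t E
  | TPi a b => fv_ty a ++ fv_ty b
  | _ => []
  end.

Fixpoint lc_t {G : Type} (k : nat) (t : term G) : Prop :=
  match t with
  | BVar i => i < k
  | Lam s M => lc_ty k s /\ lc_t (S k) M
  | App M N => lc_t k M /\ lc_t k N
  | Yc s => lc_ty k s
  | Op _ a b => lc_t k a /\ lc_t k b
  | _ => True
  end
with lc_ty {G : Type} (k : nat) (s : ty G) : Prop :=
  match s with
  | TCirc E => lc_t k E
  | TPi a b => lc_ty k a /\ lc_ty (S k) b
  | _ => True
  end.

Definition closed {G : Type} (t : term G) : Prop := fv_t t = [] /\ lc_t 0 t.

(* Identification of types: alpha (syntactic here), beta-convertibility *)
(* of terms occurring in types, and the commutative-semiring laws of    *)
(* +, * with 0, 1 (plus evaluation of numeral arithmetic).   *)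

Inductive ring_ax {G : Type} : term G -> term G -> Prop :=
| RA_addA a b c : ring_ax (Op OPlus (Op OPlus a b) c) (Op OPlus a (Op OPlus b c))
| RA_addC a b : ring_ax (Op OPlus a b) (Op OPlus b a)
| RA_add0 a : ring_ax (Op OPlus (Num 0) a) a
| RA_mulA a b c : ring_ax (Op OTimes (Op OTimes a b) c) (Op OTimes a (Op OTimes b c))
| RA_mulC a b : ring_ax (Op OTimes a b) (Op OTimes b a)
| RA_mul1 a : ring_ax (Op OTimes (Num 1) a) a
| RA_mul0 a : ring_ax (Op OTimes (Num 0) a) (Num 0)
| RA_distr a b c :
    ring_ax (Op OTimes a (Op OPlus b c)) (Op OPlus (Op OTimes a b) (Op OTimes a c))
| RA_num o m n : ring_ax (Op o (Num m) (Num n)) (Num (opfun o m n)).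

Inductive tstep {G : Type} : term G -> term G -> Prop :=
| S_beta s M N : tstep (App (Lam s M) N) (open_t 0 N M)
| S_ax a b : ring_ax a b -> tstep a b
| S_lam1 s s' M : tystep s s' -> tstep (Lam s M) (Lam s' M)
| S_lam2 s M M' x : ~ In x (fv_t M) -> ~ In x (fv_t M') ->
    tstep (open_t 0 (FVar x) M) (open_t 0 (FVar x) M') -> tstep (Lam s M) (Lam s M')
| S_app1 M M' N : tstep M M' -> tstep (App M N) (App M' N)
| S_app2 M N N' : tstep N N' -> tstep (App M N) (App M N')
| S_Y s s' : tystep s s' -> tstep (Yc s) (Yc s')
| S_op1 o a a' b : tstep a a' -> tstep (Op o a b) (Op o a' b)
| S_op2 o a b b' : tstep b b' -> tstep (Op o a b) (Op o a b')
with tystep {G : Type} : ty G -> ty G -> Prop :=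
| S_circ E E' : tstep E E' -> tystep (TCirc E) (TCirc E')
| S_pi1 a a' b : tystep a a' -> tystep (TPi a b) (TPi a' b)
| S_pi2 a b b' x : ~ In x (fv_ty b) -> ~ In x (fv_ty b') ->
    tystep (open_ty 0 (FVar x) b) (open_ty 0 (FVar x) b') -> tystep (TPi a b) (TPi a b').

Definition tyeq {G : Type} : ty G -> ty G -> Prop := clos_refl_sym_trans (ty G) tystep.

(* Typing.  Bases are lists of (name, type) with distinct names; the   *)
(* rules are invariant under permutation of the list (set semantics).  *)
(* Derivations are data (Type-valued) so that one can speak of the     *)
(* types occurring in a derivation.  ar g = k  iff  g is in U(k).      *)

Definition base (G : Type) := list (nat * ty G).

Inductive yshape {G : Type} : ty G -> Prop :=
| YS_nat : yshape TNat
| YS_circ E : yshape (TCirc E)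
| YS_arr a b : lc_ty 0 b -> yshape b -> yshape (TPi a b).

Inductive const_ty {G : Type} (ar : G -> nat) : term G -> ty G -> Prop :=
| C_succ : const_ty ar Succ (Arr TNat TNat)
| C_pred : const_ty ar Pred (Arr TNat TNat)
| C_if : const_ty ar If (Arr TNat (Arr TNat (Arr TNat TNat)))
| C_get : const_ty ar GetB (Arr TNat (Arr TNat TNat))
| C_set : const_ty ar SetB (Arr TNat (Arr TNat TNat))
| C_num n : const_ty ar (Num n) TIdx
| C_gate g : const_ty ar (Gate g) (TCirc (Num (ar g))).

Inductive typing {G : Type} (ar : G -> nat) : base G -> term G -> ty G -> Type :=
| T_var B B' x s :
    NoDup (map fst ((x, s) :: B)) -> Permutation B' ((x, s) :: B) ->
    (forall p, In p B -> wft ar B (snd p)) -> wft ar B s ->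
    typing ar B' (FVar x) s
| T_lam B x s N t :
    ~ In x (map fst B) -> ~ In x (fv_t N) -> ~ In x (fv_ty t) ->
    typing ar ((x, s) :: B) (open_t 0 (FVar x) N) (open_ty 0 (FVar x) t) ->
    typing ar B (Lam s N) (TPi s t)
| T_app B P Q s t :
    typing ar B P (TPi s t) -> typing ar B Q s -> typing ar B (App P Q) (open_ty 0 Q t)
| T_const B c s :
    NoDup (map fst B) -> (forall p, In p B -> wft ar B (snd p)) -> const_ty ar c s ->
    typing ar B c s
| T_ifc B E : typing ar B E TIdx ->
    typing ar B If (Arr TNat (Arr (TCirc E) (Arr (TCirc E) (TCirc E))))
| T_Y B s :
    NoDup (map fst B) -> (forall p, In p B -> wft ar B (snd p)) -> wft ar B s ->
    yshape s -> typing ar B (Yc s) (Arr (Arr s s) s)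
| T_idxnat B M : typing ar B M TIdx -> typing ar B M TNat
| T_op B o E0 E1 : typing ar B E0 TIdx -> typing ar B E1 TIdx -> typing ar B (Op o E0 E1) TIdx
| T_size B M E : typing ar B M (TCirc E) -> typing ar B (App Size M) TIdx
| T_seq B E : typing ar B E TIdx ->
    typing ar B Seq (Arr (TCirc E) (Arr (TCirc E) (TCirc E)))
| T_par B E0 E1 : typing ar B E0 TIdx -> typing ar B E1 TIdx ->
    typing ar B Par (Arr (TCirc E0) (Arr (TCirc E1)
                       (TCirc (Op OPlus (Op OPlus E0 E1) (Num 1)))))
| T_rev B E : typing ar B E TIdx -> typing ar B Reverse (Arr (TCirc E) (TCirc E))
| T_iter B E0 E1 : typing ar B E0 TIdx -> typing ar B E1 TIdx ->
    typing ar B Iter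
      (TPi TIdx (TPi (TCirc E0) (TPi (TCirc E1)
         (TCirc (Op OPlus E0 (Op OTimes (Op OPlus (Num 1) E1) (BVar 2)))))))
| T_dmeas B E : typing ar B E TIdx -> typing ar B DMeas (Arr TNat (Arr (TCirc E) TNat))
| T_conv B M s t : typing ar B M s -> tyeq s t -> typing ar B M t
(* wft B s : all typings in sC(B, s) are derivable *)
with wft {G : Type} (ar : G -> nat) : base G -> ty G -> Type :=
| W_nat B : wft ar B TNat
| W_idx B : wft ar B TIdx
| W_circ B E : typing ar B E TIdx -> wft ar B (TCirc E)
| W_pi B x s t : ~ In x (map fst B) -> ~ In x (fv_ty t) ->
    wft ar B s -> wft ar ((x, s) :: B) (open_ty 0 (FVar x) t) -> wft ar B (TPi s t).

Fixpoint occ_t {G : Type} (r : ty G) (t : term G) : Prop :=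
  match t with
  | Lam s M => occ_ty r s \/ occ_t r M
  | App M N => occ_t r M \/ occ_t r N
  | Yc s => occ_ty r s
  | Op _ a b => occ_t r a \/ occ_t r b
  | _ => False
  end
with occ_ty {G : Type} (r : ty G) (s : ty G) : Prop :=
  s = r \/
  match s with
  | TCirc E => occ_t r E
  | TPi a b => occ_ty r a \/ occ_ty r b
  | _ => False
  end.

Definition occ_judg {G : Type} (r : ty G) (B : base G) (M : term G) (s : ty G) : Prop :=
  (exists p, In p B /\ occ_ty r (snd p)) \/ occ_t r M \/ occ_ty r s.

Fixpoint occ_d {G : Type} {ar : G -> nat} (r : ty G) {B M s} (D : typing ar B M s)
  {struct D} : Prop :=
  occ_judg r B M s \/
  match D with
  | T_var _ B0 _ _ _ _ _ W w => (exists p (h : In p B0), occ_w r (W p h)) \/ occ_w r w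
  | T_lam _ _ _ _ _ _ _ _ _ D1 => occ_d r D1
  | T_app _ _ _ _ _ _ D1 D2 => occ_d r D1 \/ occ_d r D2
  | T_const _ B0 _ _ _ W _ => exists p (h : In p B0), occ_w r (W p h)
  | T_ifc _ _ _ D1 => occ_d r D1
  | T_Y _ B0 _ _ W w _ => (exists p (h : In p B0), occ_w r (W p h)) \/ occ_w r w
  | T_idxnat _ _ _ D1 => occ_d r D1
  | T_op _ _ _ _ _ D1 D2 => occ_d r D1 \/ occ_d r D2
  | T_size _ _ _ _ D1 => occ_d r D1
  | T_seq _ _ _ D1 => occ_d r D1
  | T_par _ _ _ _ D1 D2 => occ_d r D1 \/ occ_d r D2
  | T_rev _ _ _ D1 => occ_d r D1
  | T_iter _ _ _ _ D1 D2 => occ_d r D1 \/ occ_d r D2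
  | T_dmeas _ _ _ D1 => occ_d r D1
  | T_conv _ _ _ _ _ D1 _ => occ_d r D1
  end
with occ_w {G : Type} {ar : G -> nat} (r : ty G) {B s} (W : wft ar B s)
  {struct W} : Prop :=
  (exists p, In p B /\ occ_ty r (snd p)) \/ occ_ty r s \/
  match W with
  | W_nat _ _ => False
  | W_idx _ _ => False
  | W_circ _ _ _ D1 => occ_d r D1
  | W_pi _ _ _ _ _ _ _ W1 W2 => occ_w r W1 \/ occ_w r W2
  end.

Fixpoint apps {G : Type} (M : term G) (Ps : list (term G)) : term G :=
  match Ps with
  | [] => M
  | P :: Ps' => apps (App M P) Ps'
  end.

Fixpoint revc {G : Type} (dag : G -> G) (C : term G) : term G :=
  match C with
  | Gate g => Gate (dag g)
  | App (App Seq C1) C2 => App (App Seq (revc dag C2)) (revc dag C1)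
  | App (App Par C1) C2 => App (App Par (revc dag C1)) (revc dag C2)
  | C => C
  end.

Fixpoint itpar {G : Type} (n : nat) (C1 C0 : term G) : term G :=
  match n with
  | 0 => C0
  | S n' => App (App Par C1) (itpar n' C1 C0)
  end.

(* mprob k C m n : probability of obtaining outcome n when measuring the
   circuit C (on k+1 qubits) run on input m.  Kept abstract (it depends on
   the unspecified unitary semantics of the gates). *)
Inductive eval {G : Type} (ar : G -> nat) (dag : G -> G)
    (mprob : nat -> term G -> nat -> nat -> R) : term G -> R -> term G -> Prop :=
| E_num n : eval ar dag mprob (Num n) 1%R (Num n)
| E_succ M a n : eval ar dag mprob M a (Num n) ->
    eval ar dag mprob (App Succ M) a (Num (S n))
| E_pred M a n : eval ar dag mprob M a (Num n) ->
    eval ar dag mprob (App Pred M) a (Num (Nat.pred n))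
| E_beta s M N Ps a V : eval ar dag mprob (apps (open_t 0 N M) Ps) a V ->
    eval ar dag mprob (apps (App (Lam s M) N) Ps) a V
| E_if0 M L Rt a b V : eval ar dag mprob M a (Num 0) -> eval ar dag mprob L b V ->
    eval ar dag mprob (App (App (App If M) L) Rt) (a * b)%R V
| E_ifS M L Rt a b n V : eval ar dag mprob M a (Num (S n)) -> eval ar dag mprob Rt b V ->
    eval ar dag mprob (App (App (App If M) L) Rt) (a * b)%R V
| E_Y s M Ps a V : eval ar dag mprob (apps (App M (App (Yc s) M)) Ps) a V ->
    eval ar dag mprob (apps (App (Yc s) M) Ps) a V
| E_size M E a n : inhabited (typing ar [] M (TCirc E)) -> eval ar dag mprob E a (Num n) ->
    eval ar dag mprob (App Size M) a (Num n)
| E_op o E0 E1 a b m n : eval ar dag mprob E0 a (Num m) -> eval ar dag mprob E1 b (Num n) ->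
    eval ar dag mprob (Op o E0 E1) (a * b)%R (Num (opfun o m n))
| E_get M N a b m n : eval ar dag mprob M a (Num m) -> eval ar dag mprob N b (Num n) ->
    eval ar dag mprob (App (App GetB M) N) (a * b)%R (Num (Nat.b2n (Nat.testbit m n)))
| E_set M N a b m n : eval ar dag mprob M a (Num m) -> eval ar dag mprob N b (Num n) ->
    eval ar dag mprob (App (App SetB M) N) (a * b)%R (Num (Nat.setbit m n))
| E_gate g : eval ar dag mprob (Gate g) 1%R (Gate g)
| E_seq M N a b C C' : eval ar dag mprob M a C -> eval ar dag mprob N b C' ->
    eval ar dag mprob (App (App Seq M) N) (a * b)%R (App (App Seq C) C')
| E_par M N a b C C' : eval ar dag mprob M a C -> eval ar dag mprob N b C' ->
    eval ar dag mprob (App (App Par M) N) (a * b)%R (App (App Par C) C')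
| E_rev M a C : eval ar dag mprob M a C ->
    eval ar dag mprob (App Reverse M) a (revc dag C)
| E_iter E M0 M1 a b c n C0 C1 :
    eval ar dag mprob E a (Num n) -> eval ar dag mprob M0 b C0 -> eval ar dag mprob M1 c C1 ->
    eval ar dag mprob (App (App (App Iter E) M0) M1) (a * b * c)%R (itpar n C1 C0)
| E_dmeas M N a b m k C n :
    eval ar dag mprob M a (Num m) -> eval ar dag mprob N b C ->
    inhabited (typing ar [] N (TCirc (Num k))) ->
    (0 < mprob k C m n <= 1)%R ->
    eval ar dag mprob (App (App DMeas M) N) (a * b * mprob k C m n)%R (Num n).

(* Main.v *)
Require Import Defs.
From Stdlib Require Import List Arith PeanoNat Lia Permutation Relations Bool Reals.
Import ListNotations.

Scheme term_ind2 := Induction for term Sort Prop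
  with ty_ind2 := Induction for ty Sort Prop.
Combined Scheme term_ty_ind from term_ind2, ty_ind2.

Ltac splitapp := repeat match goal with
 | H : In _ (_ ++ _) |- _ => apply in_app_or in H; destruct H
 end.

Section Syn.
Context {G : Type}.

Fixpoint subst_t (f : nat -> term G) (t : term G) : term G :=
  match t with
  | FVar x => f x
  | Lam s M => Lam (subst_ty f s) (subst_t f M)
  | App M N => App (subst_t f M) (subst_t f N)
  | Yc s => Yc (subst_ty f s)
  | Op o a b => Op o (subst_t f a) (subst_t f b)
  | t => t
  end
with subst_ty (f : nat -> term G) (s : ty G) : ty G :=
  match s with
  | TCirc E => TCirc (subst_t f E)
  | TPi a b => TPi (subst_ty f a) (subst_ty f b)
  | s => s
  end.

Definition lcf (f : nat -> term G) := forall n, lc_t 0 (f n).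

Lemma lc_mono_all :
  (forall (t : term G) j, lc_t j t -> forall k, j <= k -> lc_t k t) /\
  (forall (s : ty G) j, lc_ty j s -> forall k, j <= k -> lc_ty k s).
Proof.
  apply term_ty_ind; simpl; intros;
  repeat match goal with H : _ /\ _ |- _ => destruct H end;
  try split; eauto; try lia.
  all: try (eapply H0; eauto; lia).
Qed.

Lemma open_lc_all :
  (forall (t : term G) j, lc_t j t -> forall k (u : term G), j <= k -> open_t k u t = t) /\
  (forall (s : ty G) j, lc_ty j s -> forall k (u : term G), j <= k -> open_ty k u s = s).
Proof.
  apply term_ty_ind; simpl; intros;
  repeat match goal with H : _ /\ _ |- _ => destruct H end;
  try (f_equal; eauto; fail).
  - destruct (Nat.eqb_spec n k); auto; lia.
  - f_equal; [eapply H; eauto | eapply H0; eauto; lia].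
  - f_equal; [eapply H; eauto | eapply H0; eauto; lia].
Qed.

Lemma open_lc0_t (t u : term G) k : lc_t 0 t -> open_t k u t = t.
Proof. intros; eapply (proj1 open_lc_all); eauto; lia. Qed.
Lemma open_lc0_ty (t : ty G) u k : lc_ty 0 t -> open_ty k u t = t.
Proof. intros; eapply (proj2 open_lc_all); eauto; lia. Qed.

Lemma subst_open_all (f : nat -> term G) : lcf f ->
  (forall (t : term G) k u, subst_t f (open_t k u t) = open_t k (subst_t f u) (subst_t f t)) /\
  (forall (s : ty G) k u, subst_ty f (open_ty k u s) = open_ty k (subst_t f u) (subst_ty f s)).
Proof.
  intro Hf. apply term_ty_ind; simpl; intros; auto; try (f_equal; auto; fail).
  - destruct (Nat.eqb n k); auto.
  - rewrite open_lc0_t; auto.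
Qed.

Lemma subst_open_t f t k u : lcf f -> subst_t f (open_t k u t) = open_t k (subst_t f u) (subst_t f t).
Proof. intros H; apply (proj1 (subst_open_all f H)). Qed.
Lemma subst_open_ty f s k u : lcf f -> subst_ty f (open_ty k u s) = open_ty k (subst_t f u) (subst_ty f s).
Proof. intros H; apply (proj2 (subst_open_all f H)). Qed.

Lemma subst_ext_all :
  (forall (t : term G) f g, (forall n, In n (fv_t t) -> f n = g n) -> subst_t f t = subst_t g t) /\
  (forall (s : ty G) f g, (forall n, In n (fv_ty s) -> f n = g n) -> subst_ty f s = subst_ty g s).
Proof.
  apply term_ty_ind; simpl; intros; auto;
  try (f_equal; [apply H | apply H0]; intros; apply H1; apply in_or_app; auto; fail);
  try (f_equal; apply H; auto; fail).
Qed.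

Lemma subst_var_all :
  (forall t : term G, subst_t FVar t = t) /\ (forall s : ty G, subst_ty FVar s = s).
Proof. apply term_ty_ind; simpl; intros; auto; f_equal; auto. Qed.

Lemma subst_id_t f (t : term G) : (forall n, In n (fv_t t) -> f n = FVar n) -> subst_t f t = t.
Proof. intros; rewrite ((proj1 subst_ext_all) t f FVar H). apply subst_var_all. Qed.
Lemma subst_id_ty f (t : ty G) : (forall n, In n (fv_ty t) -> f n = FVar n) -> subst_ty f t = t.
Proof. intros; rewrite ((proj2 subst_ext_all) t f FVar H). apply subst_var_all. Qed.

Lemma subst_comp_all :
  (forall (t : term G) f g, subst_t f (subst_t g t) = subst_t (fun n => subst_t f (g n)) t) /\
  (forall (s : ty G) f g, subst_ty f (subst_ty g s) = subst_ty (fun n => subst_t f (g n)) s).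
Proof. apply term_ty_ind; simpl; intros; auto; f_equal; auto. Qed.

Lemma fv_subst_all :
  (forall (t : term G) f n, In n (fv_t (subst_t f t)) -> exists m, In m (fv_t t) /\ In n (fv_t (f m))) /\
  (forall (s : ty G) f n, In n (fv_ty (subst_ty f s)) -> exists m, In m (fv_ty s) /\ In n (fv_t (f m))).
Proof.
  apply term_ty_ind; simpl; intros; try tauto;
  try (apply in_app_or in H1; destruct H1 as [H1|H1];
       [destruct (H _ _ H1) as [m [? ?]] | destruct (H0 _ _ H1) as [m [? ?]]];
       exists m; split; auto; apply in_or_app; auto; fail).
  - exists n; auto.
  - eauto.
  - eauto.
Qed.



Lemma lc_subst_all f : lcf f ->
  (forall (t : term G) k, lc_t k t -> lc_t k (subst_t f t)) /\
  (forall (s : ty G) k, lc_ty k s -> lc_ty k (subst_ty f s)).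
Proof.
  intro Hf. apply term_ty_ind; simpl; intros;
  repeat match goal with H : _ /\ _ |- _ => destruct H end;
  try split; auto.
  eapply (proj1 lc_mono_all); [apply Hf| lia].
Qed.


Lemma fv_open_sub_all :
  (forall (t : term G) k (u : term G) n, In n (fv_t (open_t k u t)) -> In n (fv_t t) \/ In n (fv_t u)) /\
  (forall (s : ty G) k (u : term G) n, In n (fv_ty (open_ty k u s)) -> In n (fv_ty s) \/ In n (fv_t u)).
Proof.
  apply term_ty_ind; simpl; intros; auto; splitapp;
  repeat match goal with
   | IH : forall k u n, In n (fv_t (open_t k u ?x)) -> _ , H : In _ (fv_t (open_t _ _ ?x)) |- _ =>
       destruct (IH _ _ _ H); clear H
   | IH : forall k u n, In n (fv_ty (open_ty k u ?x)) -> _ , H : In _ (fv_ty (open_ty _ _ ?x)) |- _ =>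
       destruct (IH _ _ _ H); clear H
   end; auto using in_or_app.
  destruct (Nat.eqb n k); simpl in *; auto.
Qed.

Lemma fv_open_sup_all :
  (forall (t : term G) k (u : term G) n, In n (fv_t t) -> In n (fv_t (open_t k u t))) /\
  (forall (s : ty G) k (u : term G) n, In n (fv_ty s) -> In n (fv_ty (open_ty k u s))).
Proof.
  apply term_ty_ind; simpl; intros; auto; try tauto; splitapp; apply in_or_app; eauto.
Qed.


Definition fresh (l : list nat) : nat := S (fold_right Nat.max 0 l).
Lemma fresh_notin l : ~ In (fresh l) l.
Proof.
  assert (forall n, In n l -> n <= fold_right Nat.max 0 l).
  { induction l; simpl; intros; try tauto. destruct H; subst; try lia.
    specialize (IHl _ H); lia. }
  unfold fresh; intro H1; apply H in H1; lia.
Qed.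

Scheme tstep_ind2 := Induction for tstep Sort Prop
  with tystep_ind2 := Induction for tystep Sort Prop.
Combined Scheme tstep_tystep_ind from tstep_ind2, tystep_ind2.

Definition upd (f : nat -> term G) (x : nat) (u : term G) : nat -> term G :=
  fun n => if Nat.eqb n x then u else f n.

Lemma lcf_upd f x u : lcf f -> lc_t 0 u -> lcf (upd f x u).
Proof. unfold lcf, upd; intros; destruct (Nat.eqb n x); auto. Qed.

Lemma subst_upd_fresh_t f x u (t : term G) : ~ In x (fv_t t) -> subst_t (upd f x u) t = subst_t f t.
Proof.
  intros; apply (proj1 subst_ext_all); intros; unfold upd.
  destruct (Nat.eqb_spec n x); subst; tauto.
Qed.
Lemma subst_upd_fresh_ty f x u (t : ty G) : ~ In x (fv_ty t) -> subst_ty (upd f x u) t = subst_ty f t.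
Proof.
  intros; apply (proj2 subst_ext_all); intros; unfold upd.
  destruct (Nat.eqb_spec n x); subst; tauto.
Qed.

Lemma ring_ax_subst f (a b : term G) : ring_ax a b -> ring_ax (subst_t f a) (subst_t f b).
Proof. intro H; destruct H; simpl; constructor. Qed.

Lemma step_subst_all :
  (forall (M M' : term G), tstep M M' -> forall f, lcf f -> tstep (subst_t f M) (subst_t f M')) /\
  (forall (s s' : ty G), tystep s s' -> forall f, lcf f -> tystep (subst_ty f s) (subst_ty f s')).
Proof.
  apply tstep_tystep_ind; intros; simpl.
  - rewrite subst_open_t; auto. constructor.
  - constructor; apply ring_ax_subst; auto.
  - apply S_lam1; auto.
  - set (z := fresh (fv_t (subst_t f M) ++ fv_t (subst_t f M'))).
    assert (Hz := fresh_notin (fv_t (subst_t f M) ++ fv_t (subst_t f M'))).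
    fold z in Hz.
    apply S_lam2 with (x := z).
    + intro; apply Hz; apply in_or_app; auto.
    + intro; apply Hz; apply in_or_app; auto.
    + specialize (H (upd f x (FVar z)) (lcf_upd f x (FVar z) H0 I)).
      rewrite !subst_open_t in H by (apply lcf_upd; simpl; auto).
      rewrite (subst_upd_fresh_t f x (FVar z) M n), (subst_upd_fresh_t f x (FVar z) M' n0) in H.
      simpl in H; unfold upd in H; rewrite Nat.eqb_refl in H; exact H.
  - apply S_app1; auto.
  - apply S_app2; auto.
  - apply S_Y; auto.
  - apply S_op1; auto.
  - apply S_op2; auto.
  - apply S_circ; auto.
  - apply S_pi1; auto.
  - set (z := fresh (fv_ty (subst_ty f b) ++ fv_ty (subst_ty f b'))).
    assert (Hz := fresh_notin (fv_ty (subst_ty f b) ++ fv_ty (subst_ty f b'))).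
    fold z in Hz.
    apply S_pi2 with (x := z).
    + intro; apply Hz; apply in_or_app; auto.
    + intro; apply Hz; apply in_or_app; auto.
    + specialize (H (upd f x (FVar z)) (lcf_upd f x (FVar z) H0 I)).
      rewrite !subst_open_ty in H by (apply lcf_upd; simpl; auto).
      rewrite !subst_upd_fresh_ty in H by auto.
      simpl in H; unfold upd in H; rewrite Nat.eqb_refl in H; exact H.
Qed.

Lemma tyeq_subst f (s t : ty G) : lcf f -> tyeq s t -> tyeq (subst_ty f s) (subst_ty f t).
Proof.
  intros Hf H; induction H.
  - apply rst_step; apply (proj2 step_subst_all); auto.
  - apply rst_refl.
  - apply rst_sym; auto.
  - eapply rst_trans; eauto.
Qed.

End Syn.

Scheme typing_ind2 := Induction for typing Sort Prop
  with wft_ind2 := Induction for wft Sort Prop.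
Combined Scheme typing_wft_ind from typing_ind2, wft_ind2.

Section Ty.
Context {G : Type}.

Fixpoint fvT (t : term G) : list nat :=
  match t with
  | FVar x => [x]
  | Lam _ M => fvT M
  | App M N => fvT M ++ fvT N
  | Op _ a b => fvT a ++ fvT b
  | _ => []
  end.

Lemma fvT_fv (t : term G) n : In n (fvT t) -> In n (fv_t t).
Proof.
  induction t; simpl; intros; auto; splitapp; auto using in_or_app; tauto.
Qed.

Lemma fvT_open (t : term G) k u n : In n (fvT (open_t k u t)) -> In n (fvT t) \/ In n (fvT u).
Proof.
  revert k; induction t; simpl; intros; auto; try tauto; splitapp;
  repeat match goal with
   | IH : forall k, In n (fvT (open_t k u ?x)) -> _ , H : In n (fvT (open_t _ _ ?x)) |- _ =>
       destruct (IH _ H); clear H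
   end; auto using in_or_app; eauto.
  destruct (Nat.eqb n0 k); simpl in *; tauto.
Qed.

Lemma fvT_open_sup (t : term G) k u n : In n (fvT t) -> In n (fvT (open_t k u t)).
Proof.
  revert k; induction t; simpl; intros; auto; try tauto; splitapp; apply in_or_app; eauto.
Qed.

Fixpoint CF (s : ty G) : bool :=
  match s with
  | TNat | TIdx => true
  | TCirc _ => false
  | TPi a b => CF a && CF b
  end.

Lemma CF_open (s : ty G) k u : CF (open_ty k u s) = CF s.
Proof. revert k; induction s; simpl; intros; auto. rewrite IHs1, IHs2; auto. Qed.

Lemma CF_subst (s : ty G) f : CF (subst_ty f s) = CF s.
Proof. induction s; simpl; intros; auto. rewrite IHs1, IHs2; auto. Qed.

Lemma CF_subst_id (s : ty G) f : CF s = true -> subst_ty f s = s.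
Proof.
  induction s; simpl; intros; auto; try discriminate.
  apply andb_prop in H; destruct H; rewrite IHs1, IHs2; auto.
Qed.

Lemma CF_open_id (s : ty G) k u : CF s = true -> open_ty k u s = s.
Proof.
  revert k; induction s; simpl; intros; auto; try discriminate.
  apply andb_prop in H; destruct H; rewrite IHs1, IHs2; auto.
Qed.

Lemma CF_fv (s : ty G) : CF s = true -> fv_ty s = [].
Proof.
  induction s; simpl; intros; auto; try discriminate.
  apply andb_prop in H; destruct H; rewrite IHs1, IHs2; auto.
Qed.

Definition notPi (s : ty G) : Prop := match s with TPi _ _ => False | _ => True end.

Fixpoint NP (s : ty G) : Prop :=
  match s with
  | TPi a b => notPi a \/ NP b
  | _ => False
  end.

Lemma NP_open (s : ty G) k u : NP (open_ty k u s) <-> NP s.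
Proof.
  revert k; induction s; simpl; intros; try tauto.
  rewrite IHs2. destruct s1; simpl; tauto.
Qed.

Fixpoint tsize (s : ty G) : nat :=
  match s with
  | TPi a b => S (tsize a + tsize b)
  | _ => 1
  end.

Lemma tsize_open (s : ty G) k u : tsize (open_ty k u s) = tsize s.
Proof. revert k; induction s; simpl; intros; auto. Qed.

Lemma tsize_subst (s : ty G) f : tsize (subst_ty f s) = tsize s.
Proof. induction s; simpl; intros; auto. Qed.

Lemma tsize_pos (s : ty G) : 1 <= tsize s.
Proof. destruct s; simpl; lia. Qed.

Lemma step_shape_all :
  (forall (M M' : term G), tstep M M' -> True) /\
  (forall (s s' : ty G), tystep s s' ->
     tsize s = tsize s' /\ (NP s <-> NP s') /\ (notPi s <-> notPi s') /\
     (s = TNat -> s' = TNat) /\ (s' = TNat -> s = TNat) /\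
     (s = TIdx -> s' = TIdx) /\ (s' = TIdx -> s = TIdx)).
Proof.
  apply tstep_tystep_ind; intros; auto.
  - simpl; repeat split; intros; try discriminate; tauto.
  - destruct H as [H1 [H2 [H3 _]]]. simpl. repeat split; intros; try discriminate; try lia; try tauto.
  - destruct H as [H1 [H2 [H3 _]]]. rewrite !tsize_open in H1. rewrite !NP_open in H2.
    simpl. repeat split; intros; try discriminate; try lia; try tauto.
Qed.

Lemma tyeq_shape (s s' : ty G) : tyeq s s' ->
     tsize s = tsize s' /\ (NP s <-> NP s') /\ (notPi s <-> notPi s') /\
     (s = TNat -> s' = TNat) /\ (s' = TNat -> s = TNat) /\
     (s = TIdx -> s' = TIdx) /\ (s' = TIdx -> s = TIdx).
Proof.
  intro H; induction H.
  - apply (proj2 step_shape_all); auto.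
  - repeat split; auto; tauto.
  - destruct IHclos_refl_sym_trans as [? [? [? [? [? [? ?]]]]]]; repeat split; auto; try lia; tauto.
  - destruct IHclos_refl_sym_trans1 as [? [? [? [? [? [? ?]]]]]];
    destruct IHclos_refl_sym_trans2 as [? [? [? [? [? [? ?]]]]]]; repeat split; intros; auto; try lia; try tauto.
Qed.

Variable ar : G -> nat.

Lemma FVT_all :
  (forall B M t (D : typing ar B M t), forall c, In c (fvT M) -> In c (map fst B)) /\
  (forall B s (W : wft ar B s), True).
Proof.
  apply (typing_wft_ind G ar (fun B M t _ => forall c, In c (fvT M) -> In c (map fst B))
                        (fun B s _ => True)); intros; simpl in *; auto; try tauto.
  - destruct H1; try tauto; subst. apply Permutation_sym in p.
    eapply Permutation_in; [apply Permutation_map; eauto|]. simpl; auto.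
  - match goal with H : forall c, In c (fvT (open_t _ _ _)) -> _ , H0 : In ?c (fvT _) |- _ =>
      specialize (H c (fvT_open_sup _ _ _ _ H0)) end. simpl in *.
    match goal with H : _ \/ _ |- _ => destruct H end; subst; auto.
    exfalso; apply n0; apply fvT_fv; auto.
  - splitapp; auto.
  - match goal with Hc : const_ty _ _ _ |- _ => inversion Hc; subst; simpl in *; tauto end.
  - splitapp; auto.
Qed.

Lemma FVT B M t (D : typing ar B M t) c : In c (fvT M) -> In c (map fst B).
Proof. apply (proj1 FVT_all B M t D). Qed.


Inductive Reach (s0 : ty G) : ty G -> nat -> Prop :=
| R_refl c : Reach s0 s0 c
| R_dom a b c : Reach s0 a c -> Reach s0 (TPi a b) c
| R_cod a b c x : x <> c -> Reach s0 (open_ty 0 (FVar x) b) c -> Reach s0 (TPi a b) c.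

Lemma Reach_trans s0 s1 s c : Reach s0 s1 c -> Reach s1 s c -> Reach s0 s c.
Proof. intros H1 H2; induction H2; auto. - apply R_dom; auto. - eapply R_cod; eauto. Qed.

Lemma Reach_CF s0 s c : Reach s0 s c -> CF s0 = false -> CF s = false.
Proof.
  intro H; induction H; intros; auto; simpl.
  - rewrite IHReach; auto.
  - rewrite CF_open in IHReach. rewrite IHReach; auto. apply Bool.andb_false_r.
Qed.

Fixpoint LitIn (c : nat) (s : ty G) : Prop :=
  match s with
  | TCirc E => In c (fvT E)
  | TPi a b => LitIn c a \/ LitIn c b
  | _ => False
  end.

Lemma LitIn_open_sup c s k u : LitIn c s -> LitIn c (open_ty k u s).
Proof.
  revert k; induction s; simpl; intros; auto.
  - apply fvT_open_sup; auto.
  - destruct H; auto.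
Qed.

Lemma LitIn_open_inv c s k x : LitIn c (open_ty k (FVar x) s) -> x <> c -> LitIn c s.
Proof.
  revert k; induction s; simpl; intros; auto.
  - apply fvT_open in H; simpl in H; destruct H; auto. destruct H; subst; tauto.
  - destruct H; eauto.
Qed.

Lemma LitIn_fv c s : LitIn c s -> In c (fv_ty s).
Proof.
  induction s; simpl; intros; auto using fvT_fv.
  destruct H; apply in_or_app; auto.
Qed.

Lemma Reach_Lit s0 s c : Reach s0 s c -> LitIn c s0 -> LitIn c s.
Proof.
  intro H; induction H; intros; simpl; auto.
  right. eapply LitIn_open_inv; eauto.
Qed.

Lemma LitWft_all :
  (forall B M t (D : typing ar B M t), True) /\
  (forall B s (W : wft ar B s), forall c, LitIn c s -> In c (map fst B)).
Proof.
  apply (typing_wft_ind G ar (fun B M t _ => True)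
           (fun B s _ => forall c, LitIn c s -> In c (map fst B))); intros; simpl in *; auto; try tauto.
  - eapply FVT; eauto.
  - match goal with H : _ \/ _ |- _ => destruct H end; auto.
    match goal with H : LitIn _ t |- _ => pose proof (LitIn_open_sup _ _ 0 (FVar x) H) end.
    match goal with H : forall c, LitIn c (open_ty _ _ _) -> _ , H1 : LitIn ?c (open_ty _ _ _) |- _ =>
      specialize (H _ H1) end.
    simpl in *. match goal with H : _ \/ _ |- _ => destruct H end; auto; subst.
    exfalso. apply n0. apply LitIn_fv; auto.
Qed.

Lemma LitWft B s (W : wft ar B s) c : LitIn c s -> In c (map fst B).
Proof. apply (proj2 LitWft_all B s W). Qed.



Lemma in_fst {A B : Type} (a : A) (b : B) l : In (a, b) l -> In a (map fst l).
Proof. intro H; apply (in_map fst) in H; auto. Qed.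

Lemma Main_all :
  (forall B M t (D : typing ar B M t), forall c s, In (c, s) B -> CF s = false ->
      NP t \/ (In c (fvT M) /\ exists L, ~ In c (map fst L) /\ inhabited (wft ar L s))) /\
  (forall B s0 (W : wft ar B s0), forall c s, In (c, s) B -> CF s0 = false -> Reach s0 s c -> False).
Proof.
  apply (typing_wft_ind G ar
    (fun B M t _ => forall c s, In (c, s) B -> CF s = false ->
      NP t \/ (In c (fvT M) /\ exists L, ~ In c (map fst L) /\ inhabited (wft ar L s)))
    (fun B s0 _ => forall c s, In (c, s) B -> CF s0 = false -> Reach s0 s c -> False));
  intros; simpl in *.
  -
    assert (Hin : In (c, s0) ((x, s) :: B)) by (eapply Permutation_in; eauto).
    destruct Hin as [Heq | Hin].
    + inversion Heq; subst. right; split; auto. exists B; split; [inversion n; auto| constructor; auto].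
    + exfalso; eapply (H (c, s0) Hin); simpl; eauto. constructor.
  -
    assert (Hx : c <> x) by (intro; subst; apply n; eapply in_fst; eauto).
    destruct (H c s0 (or_intror H0) H1) as [Hn | [Hf HL]].
    + left; right; apply NP_open in Hn; auto.
    + right; split; auto. apply fvT_open in Hf; simpl in Hf; destruct Hf as [Hf|[Hf|Hf]]; auto; subst; tauto.
  -
    destruct (H c s0 H1 H2) as [[Hn|Hn] | [Hf HL]].
    + destruct (H0 c s0 H1 H2) as [Hn'|[Hf HL]].
      * destruct s; simpl in *; tauto.
      * right; split; auto; apply in_or_app; auto.
    + left; apply NP_open; auto.
    + right; split; auto; apply in_or_app; auto.
  - exfalso; eapply (H (c1, s0) H0); simpl; eauto; constructor.
  - left; left; simpl; auto.
  - exfalso; eapply (H (c, s0) H1); simpl; eauto; constructor.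
  - destruct (H c s H0 H1) as [Hn|HH]; auto; contradiction.
  - destruct (H c s H1 H2) as [Hn|[Hf HL]]; [contradiction|].
    right; split; auto; apply in_or_app; auto.
  - destruct (H c s H0 H1) as [Hn|[Hf HL]]; [contradiction|]. right; split; auto.
  - left; left; simpl; auto.
  - left; left; simpl; auto.
  - left; left; simpl; auto.
  - left; left; simpl; auto.
  - left; left; simpl; auto.
  - destruct (H c s0 H0 H1) as [Hn|HH]; auto. left. apply (tyeq_shape _ _ t1); auto.
  - discriminate.
  - discriminate.
  -
    assert (Hs : CF s = false) by (eapply Reach_CF; eauto).
    destruct (H c s H0 Hs) as [Hn|[Hf [L [HL [W]]]]]; [contradiction|].
    apply HL. eapply LitWft; eauto. eapply Reach_Lit; eauto.
  -
    apply Bool.andb_false_iff in H2. destruct H2 as [H2|H2].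
    + eapply H; eauto. eapply Reach_trans; [|eauto]. apply R_dom; constructor.
    + eapply H0; [right; eauto| rewrite CF_open; auto|].
      eapply Reach_trans; [|eauto]. eapply R_cod; [|constructor].
      intro; subst; apply n; eapply in_fst; eauto.
Qed.

Lemma selfwft_CF B : (forall p, In p B -> wft ar B (snd p)) -> forall p, In p B -> CF (snd p) = true.
Proof.
  intros W p Hp. destruct (CF (snd p)) eqn:E; auto. exfalso.
  destruct p as [c s]. eapply (proj2 Main_all _ _ (W _ Hp) c s Hp E). constructor.
Qed.


Lemma lc_open_inv_all :
  (forall (t : term G) k u, lc_t k (open_t k u t) -> lc_t (S k) t) /\
  (forall (s : ty G) k u, lc_ty k (open_ty k u s) -> lc_ty (S k) s).
Proof.
  apply term_ty_ind; simpl; intros;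
  repeat match goal with H : _ /\ _ |- _ => destruct H end; try split; eauto; try tauto.
  destruct (Nat.eqb_spec n k); subst; simpl in *; lia.
Qed.

Lemma lc_open_all :
  (forall (t : term G) k u, lc_t (S k) t -> lc_t 0 u -> lc_t k (open_t k u t)) /\
  (forall (s : ty G) k u, lc_ty (S k) s -> lc_t 0 u -> lc_ty k (open_ty k u s)).
Proof.
  apply term_ty_ind; simpl; intros;
  repeat match goal with H : _ /\ _ |- _ => destruct H end; try split; eauto; try tauto.
  destruct (Nat.eqb_spec n k); subst; simpl in *; try lia.
  eapply (proj1 lc_mono_all); eauto; lia.
Qed.

Lemma typing_lc_all :
  (forall B M t (D : typing ar B M t), lc_t 0 M /\ forall p, In p B -> lc_ty 0 (snd p)) /\
  (forall B s (W : wft ar B s), lc_ty 0 s).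
Proof.
  apply (typing_wft_ind G ar
    (fun B M t _ => lc_t 0 M /\ forall p, In p B -> lc_ty 0 (snd p))
    (fun B s _ => lc_ty 0 s));
  intros; simpl in *;
  repeat match goal with H : _ /\ _ |- _ => destruct H end; try split; auto.
  - intros p0 Hp. apply Permutation_in with (l' := (x, s) :: B) in Hp; auto.
    destruct Hp; subst; simpl; auto.
  - split; [apply (H0 (x, s)); left; auto| eapply (proj1 lc_open_inv_all); eauto].
  - match goal with Hc : const_ty _ _ _ |- _ => inversion Hc; subst; simpl; auto end.
  - eapply (proj2 lc_open_inv_all); eauto.
Qed.


Lemma typing_lc B M t (D : typing ar B M t) : lc_t 0 M.
Proof. apply (proj1 typing_lc_all B M t D). Qed.
Lemma wft_lc B s (W : wft ar B s) : lc_ty 0 s.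
Proof. apply (proj2 typing_lc_all B s W). Qed.

Lemma cf_wft (s : ty G) : CF s = true -> forall B, wft ar B s.
Proof.
  induction s; simpl; intros; try discriminate.
  - apply W_nat.
  - apply W_idx.
  - apply andb_prop in H; destruct H.
    set (x := fresh (map fst B)).
    apply W_pi with (x := x).
    + apply fresh_notin.
    + rewrite CF_fv; auto.
    + apply IHs1; auto.
    + rewrite CF_open_id; auto.
Qed.

End Ty.

Section Eqv.
Context {G : Type}.
Variable ar : G -> nat.

Fixpoint bnl {B M t} (D : typing ar B M t) {struct D} : list nat :=
  match D with
  | T_var _ _ _ _ _ _ _ _ w => bnlw w
  | T_lam _ _ x _ _ _ _ _ _ D1 => x :: bnl D1
  | T_app _ _ _ _ _ _ D1 D2 => bnl D1 ++ bnl D2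
  | T_const _ _ _ _ _ _ _ => []
  | T_ifc _ _ _ D1 => bnl D1
  | T_Y _ _ _ _ _ w _ => bnlw w
  | T_idxnat _ _ _ D1 => bnl D1
  | T_op _ _ _ _ _ D1 D2 => bnl D1 ++ bnl D2
  | T_size _ _ _ _ D1 => bnl D1
  | T_seq _ _ _ D1 => bnl D1
  | T_par _ _ _ _ D1 D2 => bnl D1 ++ bnl D2
  | T_rev _ _ _ D1 => bnl D1
  | T_iter _ _ _ _ D1 D2 => bnl D1 ++ bnl D2
  | T_dmeas _ _ _ D1 => bnl D1
  | T_conv _ _ _ _ _ D1 _ => bnl D1
  end
with bnlw {B s} (W : wft ar B s) {struct W} : list nat :=
  match W with
  | W_nat _ _ => []
  | W_idx _ _ => []
  | W_circ _ _ _ D1 => bnl D1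
  | W_pi _ _ x _ _ _ _ W1 W2 => x :: bnlw W1 ++ bnlw W2
  end.


Definition sw (a b n : nat) : nat := if Nat.eqb n a then b else if Nat.eqb n b then a else n.

Lemma sw_inv a b n : sw a b (sw a b n) = n.
Proof.
  unfold sw. destruct (Nat.eqb_spec n a); subst.
  - destruct (Nat.eqb_spec b a); subst; auto. rewrite Nat.eqb_refl; auto.
  - destruct (Nat.eqb_spec n b); subst.
    + rewrite Nat.eqb_refl; auto.
    + destruct (Nat.eqb_spec n a); try tauto. destruct (Nat.eqb_spec n b); tauto.
Qed.

Lemma sw_inj a b n m : sw a b n = sw a b m -> n = m.
Proof. intro H; rewrite <- (sw_inv a b n), <- (sw_inv a b m), H; auto. Qed.

Definition swf (a b : nat) : nat -> term G := fun n => FVar (sw a b n).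

Lemma lcf_swf a b : lcf (swf a b).
Proof. unfold lcf, swf; simpl; auto. Qed.

Lemma fv_subst_sup_all :
  (forall (t : term G) f m n, In m (fv_t t) -> In n (fv_t (f m)) -> In n (fv_t (subst_t f t))) /\
  (forall (s : ty G) f m n, In m (fv_ty s) -> In n (fv_t (f m)) -> In n (fv_ty (subst_ty f s))).
Proof.
  apply term_ty_ind; simpl; intros; try tauto; splitapp; try (apply in_or_app; eauto; fail).
  - destruct H; subst; auto; tauto.
  - eauto.
  - eauto.
Qed.

Lemma fv_swap_t a b (t : term G) n : In n (fv_t (subst_t (swf a b) t)) <-> In (sw a b n) (fv_t t).
Proof.
  split; intro H.
  - destruct ((proj1 fv_subst_all) t _ _ H) as [m [Hm Hn]]. unfold swf in Hn; simpl in Hn.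
    destruct Hn as [Hn|[]]; subst. rewrite sw_inv; auto.
  - eapply (proj1 fv_subst_sup_all); eauto. unfold swf; simpl; left; apply sw_inv.
Qed.

Lemma fv_swap_ty a b (t : ty G) n : In n (fv_ty (subst_ty (swf a b) t)) <-> In (sw a b n) (fv_ty t).
Proof.
  split; intro H.
  - destruct ((proj2 fv_subst_all) t _ _ H) as [m [Hm Hn]]. unfold swf in Hn; simpl in Hn.
    destruct Hn as [Hn|[]]; subst. rewrite sw_inv; auto.
  - eapply (proj2 fv_subst_sup_all); eauto. unfold swf; simpl; left; apply sw_inv.
Qed.

Lemma swap_swap_ty a b (t : ty G) : subst_ty (swf a b) (subst_ty (swf a b) t) = t.
Proof.
  rewrite (proj2 subst_comp_all). apply subst_id_ty. intros; unfold swf; simpl. rewrite sw_inv; auto.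
Qed.

Definition swB a b (B : base G) : base G :=
  map (fun p => (sw a b (fst p), subst_ty (swf a b) (snd p))) B.

Lemma swB_fst a b B : map fst (swB a b B) = map (sw a b) (map fst B).
Proof. unfold swB; rewrite !map_map; simpl; auto. Qed.

Lemma NoDup_map_inj {A B : Type} (f : A -> B) l : (forall x y, f x = f y -> x = y) -> NoDup l -> NoDup (map f l).
Proof.
  intros Hf H; induction H; simpl; constructor; auto.
  intro Hin; apply in_map_iff in Hin; destruct Hin as [y [Hy Hy']]; apply Hf in Hy; subst; auto.
Qed.

Lemma in_map_sw a b n l : In n (map (sw a b) l) <-> In (sw a b n) l.
Proof.
  rewrite in_map_iff; split.
  - intros [y [Hy Hy']]; subst; rewrite sw_inv; auto.
  - intros H; exists (sw a b n); rewrite sw_inv; auto.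
Qed.

Lemma yshape_subst f (s : ty G) : lcf f -> yshape s -> yshape (subst_ty f s).
Proof.
  intros Hf H; induction H; simpl; constructor; auto.
  apply (proj2 (lc_subst_all f Hf)); auto.
Qed.

Lemma const_subst f c (s : ty G) : const_ty ar c s -> subst_t f c = c /\ subst_ty f s = s.
Proof. intro H; destruct H; simpl; auto. Qed.

Lemma swB_CF a b B : (forall p, In p B -> CF (snd p) = true) -> forall p, In p (swB a b B) -> CF (snd p) = true.
Proof.
  intros H p Hp; unfold swB in Hp; apply in_map_iff in Hp; destruct Hp as [q [Hq Hq']]; subst; simpl.
  rewrite CF_subst; auto.
Qed.

Definition swp a b (p : nat * ty G) := (sw a b (fst p), subst_ty (swf a b) (snd p)).

Lemma typ_transport B M M' t t' (D : typing ar B M t) :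
  M = M' -> t = t' -> exists D' : typing ar B M' t', bnl D' = bnl D.
Proof. intros; subst; exists D; auto. Qed.

Lemma wft_transport B t t' (D : wft ar B t) :
  t = t' -> exists D' : wft ar B t', bnlw D' = bnlw D.
Proof. intros; subst; exists D; auto. Qed.

Lemma EQV_all a b :
  (forall B M t (D : typing ar B M t),
     exists D' : typing ar (swB a b B) (subst_t (swf a b) M) (subst_ty (swf a b) t),
       bnl D' = map (sw a b) (bnl D)) /\
  (forall B s (W : wft ar B s),
     exists W' : wft ar (swB a b B) (subst_ty (swf a b) s),
       bnlw W' = map (sw a b) (bnlw W)).
Proof.
  assert (Hlc := lcf_swf a b).
  apply (typing_wft_ind G ar
    (fun B M t D => exists D' : typing ar (swB a b B) (subst_t (swf a b) M) (subst_ty (swf a b) t),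
       bnl D' = map (sw a b) (bnl D))
    (fun B s W => exists W' : wft ar (swB a b B) (subst_ty (swf a b) s),
       bnlw W' = map (sw a b) (bnlw W)));
  intros; simpl.
  -
    destruct H0 as [w' Hw'].
    assert (HCF := selfwft_CF ar B w).
    unshelve eexists (T_var ar (swB a b B) (swB a b B') (sw a b x) (subst_ty (swf a b) s) _ _ _ w').
    + change (NoDup (map fst (swB a b ((x, s) :: B)))). rewrite swB_fst.
      apply NoDup_map_inj; auto. apply sw_inj.
    + change (Permutation (swB a b B') (swB a b ((x, s) :: B))). apply Permutation_map; auto.
    + intros p0 Hp0. apply cf_wft. eapply swB_CF; eauto.
    + simpl; auto.
  -
    destruct H as [D1 HD1].
    destruct (typ_transport _ _ _ _ _ D1 (subst_open_t _ _ _ _ Hlc) (subst_open_ty _ _ _ _ Hlc)) as [D' HD']; rewrite HD1 in HD'.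
    simpl in D'.
    unshelve eexists (T_lam ar (swB a b B) (sw a b x) _ _ _ _ _ _ D').
    + rewrite swB_fst, in_map_sw, sw_inv; auto.
    + rewrite fv_swap_t, sw_inv; auto.
    + rewrite fv_swap_ty, sw_inv; auto.
    + simpl. f_equal. exact HD'.
  -
    destruct H as [D1 HD1], H0 as [D2 HD2].
    destruct (typ_transport _ _ _ _ _ (T_app ar _ _ _ _ _ D1 D2) eq_refl (eq_sym (subst_open_ty _ _ _ _ Hlc))) as [D' HD'].
    exists D'. rewrite HD'; simpl; rewrite map_app; f_equal; auto.
  -
    destruct (const_subst (swf a b) _ _ c0) as [E1 E2].
    assert (HCF := selfwft_CF ar B w).
    unshelve eexists (T_const ar (swB a b B) _ _ _ _ _); [| | rewrite E1, E2; auto | ].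
    + rewrite swB_fst; apply NoDup_map_inj; auto; apply sw_inj.
    + intros p0 Hp0. apply cf_wft. eapply swB_CF; eauto.
    + reflexivity.
  - destruct H as [D1 HD1]; exists (T_ifc ar _ _ D1); simpl; auto.
  - destruct H0 as [w' Hw'].
    assert (HCF := selfwft_CF ar B w).
    unshelve eexists (T_Y ar (swB a b B) _ _ _ w' (yshape_subst _ _ Hlc y)).
    + rewrite swB_fst; apply NoDup_map_inj; auto; apply sw_inj.
    + intros p0 Hp0. apply cf_wft. eapply swB_CF; eauto.
    + simpl; auto.
  - destruct H as [D1 HD1]; exists (T_idxnat ar _ _ D1); simpl; auto.
  - destruct H as [D1 HD1], H0 as [D2 HD2]; exists (T_op ar _ _ _ _ D1 D2); simpl; rewrite map_app; f_equal; assumption.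
  - destruct H as [D1 HD1]; exists (T_size ar _ _ _ D1); simpl; auto.
  - destruct H as [D1 HD1]; exists (T_seq ar _ _ D1); simpl; auto.
  - destruct H as [D1 HD1], H0 as [D2 HD2]; exists (T_par ar _ _ _ D1 D2); simpl; rewrite map_app; f_equal; assumption.
  - destruct H as [D1 HD1]; exists (T_rev ar _ _ D1); simpl; auto.
  - destruct H as [D1 HD1], H0 as [D2 HD2]; exists (T_iter ar _ _ _ D1 D2); simpl; rewrite map_app; f_equal; assumption.
  - destruct H as [D1 HD1]; exists (T_dmeas ar _ _ D1); simpl; auto.
  - destruct H as [D1 HD1]; exists (T_conv ar _ _ _ _ D1 (tyeq_subst _ _ _ Hlc t1)); simpl; auto.
  - exists (W_nat ar _); auto.
  - exists (W_idx ar _); auto.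
  - destruct H as [D1 HD1]; exists (W_circ ar _ _ D1); simpl; auto.
  - destruct H as [W1 HW1], H0 as [W2 HW2].
    destruct (wft_transport _ _ _ W2 (subst_open_ty _ _ _ _ Hlc)) as [W' HW']; rewrite HW2 in HW'.
    simpl in W'.
    unshelve eexists (W_pi ar (swB a b B) (sw a b x) _ _ _ _ W1 W').
    + rewrite swB_fst, in_map_sw, sw_inv; auto.
    + rewrite fv_swap_ty, sw_inv; auto.
    + simpl. f_equal. rewrite map_app. f_equal; auto.
Qed.
End Eqv.

Section Union.
Context {G : Type}.
Variable ar : G -> nat.

Lemma rename_avoid L : forall N T (D : typing ar [] N T), fv_t N = [] -> fv_ty T = [] ->
  exists D' : typing ar [] N T, forall n, In n (bnl ar D') -> ~ In n L.
Proof.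
  induction L as [|a L IHL]; intros.
  - exists D; simpl; auto.
  - destruct (IHL N T D H H0) as [D1 HD1].
    set (z := fresh (a :: L ++ bnl ar D1)).
    assert (Hz := fresh_notin (a :: L ++ bnl ar D1)). fold z in Hz.
    destruct (proj1 (EQV_all ar a z) _ _ _ D1) as [D2 HD2].
    pose (D2' := D2 : typing ar [] (subst_t (swf a z) N) (subst_ty (swf a z) T)).
    assert (E1 : subst_t (swf a z) N = N) by (apply subst_id_t; rewrite H; simpl; tauto).
    assert (E2 : subst_ty (swf a z) T = T) by (apply subst_id_ty; rewrite H0; simpl; tauto).
    destruct (typ_transport ar _ _ _ _ _ D2' E1 E2) as [D3 HD3].
    assert (HD2' : bnl ar D2' = map (sw a z) (bnl ar D1)) by exact HD2.
    exists D3. intros n Hn. rewrite HD3, HD2' in Hn.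
    apply in_map_iff in Hn. destruct Hn as [m [Hm Hm']]. subst n.
    assert (Hmz : m <> z) by (intro; subst; apply Hz; right; apply in_or_app; auto).
    specialize (HD1 m Hm').
    unfold sw. destruct (Nat.eqb_spec m a).
    + intro Hc; apply Hz. destruct Hc; [left; auto | right; apply in_or_app; auto].
    + destruct (Nat.eqb_spec m z); try tauto.
      intros [Hc|Hc]; subst; tauto.
Qed.

Lemma union_all :
  (forall B1 M t (D : typing ar B1 M t), forall X, (forall p, In p X -> CF (snd p) = true) ->
      NoDup (map fst (B1 ++ X)) -> (forall n, In n (bnl ar D) -> ~ In n (map fst X)) ->
      inhabited (typing ar (B1 ++ X) M t)) /\
  (forall B1 s (W : wft ar B1 s), forall X, (forall p, In p X -> CF (snd p) = true) ->
      NoDup (map fst (B1 ++ X)) -> (forall n, In n (bnlw ar W) -> ~ In n (map fst X)) ->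
      inhabited (wft ar (B1 ++ X) s)).
Proof.
  apply (typing_wft_ind G ar
    (fun B1 M t D => forall X, (forall p, In p X -> CF (snd p) = true) ->
      NoDup (map fst (B1 ++ X)) -> (forall n, In n (bnl ar D) -> ~ In n (map fst X)) ->
      inhabited (typing ar (B1 ++ X) M t))
    (fun B1 s W => forall X, (forall p, In p X -> CF (snd p) = true) ->
      NoDup (map fst (B1 ++ X)) -> (forall n, In n (bnlw ar W) -> ~ In n (map fst X)) ->
      inhabited (wft ar (B1 ++ X) s)));
  intros; simpl in *.
  -
    assert (Hp : Permutation (B' ++ X) ((x, s) :: B ++ X)) by (rewrite app_comm_cons; apply Permutation_app_tail; auto).
    assert (Hnd : NoDup (map fst ((x, s) :: B ++ X))) by (eapply Permutation_NoDup; [apply Permutation_map; eauto| auto]).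
    assert (HCF := selfwft_CF ar B w).
    destruct (H0 X H1) as [w']; auto.
    + simpl in Hnd; inversion Hnd; auto.
    + constructor. apply (T_var ar (B ++ X) (B' ++ X) x s Hnd Hp); auto.
      intros p0 Hp0; apply cf_wft. apply in_app_or in Hp0; destruct Hp0; auto.
  -
    assert (Hx : ~ In x (map fst X)) by (apply H2; left; auto).
    destruct (H X H0) as [D1]; auto.
    + simpl; constructor; auto. rewrite map_app; intro Hc; apply in_app_or in Hc; destruct Hc; tauto.
    + constructor. apply (T_lam ar (B ++ X) x s N t); auto.
      rewrite map_app; intro Hc; apply in_app_or in Hc; destruct Hc; tauto.
  - destruct (H X H1 H2) as [D1]; [intros; apply H3; apply in_or_app; auto|].
    destruct (H0 X H1 H2) as [D2]; [intros; apply H3; apply in_or_app; auto|].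
    constructor; eapply T_app; eauto.
  - constructor. apply T_const; auto.
    assert (HCF := selfwft_CF ar B w).
    intros p0 Hp0; apply cf_wft. apply in_app_or in Hp0; destruct Hp0; auto.
  - destruct (H X H0 H1 H2) as [D1]; constructor; apply T_ifc; auto.
  - destruct (H0 X H1 H2 H3) as [w'].
    assert (HCF := selfwft_CF ar B w).
    constructor. apply T_Y; auto.
    intros p0 Hp0; apply cf_wft. apply in_app_or in Hp0; destruct Hp0; auto.
  - destruct (H X H0 H1 H2) as [D1]; constructor; apply T_idxnat; auto.
  - destruct (H X H1 H2) as [D1]; [intros; apply H3; apply in_or_app; auto|].
    destruct (H0 X H1 H2) as [D2]; [intros; apply H3; apply in_or_app; auto|].
    constructor; eapply T_op; eauto.
  - destruct (H X H0 H1 H2) as [D1]; constructor; eapply T_size; eauto.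
  - destruct (H X H0 H1 H2) as [D1]; constructor; apply T_seq; auto.
  - destruct (H X H1 H2) as [D1]; [intros; apply H3; apply in_or_app; auto|].
    destruct (H0 X H1 H2) as [D2]; [intros; apply H3; apply in_or_app; auto|].
    constructor; eapply T_par; eauto.
  - destruct (H X H0 H1 H2) as [D1]; constructor; apply T_rev; auto.
  - destruct (H X H1 H2) as [D1]; [intros; apply H3; apply in_or_app; auto|].
    destruct (H0 X H1 H2) as [D2]; [intros; apply H3; apply in_or_app; auto|].
    constructor; eapply T_iter; eauto.
  - destruct (H X H0 H1 H2) as [D1]; constructor; apply T_dmeas; auto.
  - destruct (H X H0 H1 H2) as [D1]; constructor; eapply T_conv; eauto.
  - constructor; apply W_nat.
  - constructor; apply W_idx.
  - destruct (H X H0 H1 H2) as [D1]; constructor; apply W_circ; auto.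
  - assert (Hx : ~ In x (map fst X)) by (apply H3; left; auto).
    destruct (H X H1 H2) as [W1]; [intros; apply H3; right; apply in_or_app; auto|].
    destruct (H0 X H1) as [W2].
    + simpl; constructor; auto. rewrite map_app; intro Hc; apply in_app_or in Hc; destruct Hc; tauto.
    + intros; apply H3; right; apply in_or_app; auto.
    + constructor. apply (W_pi ar (B ++ X) x s t); auto.
      rewrite map_app; intro Hc; apply in_app_or in Hc; destruct Hc; tauto.
Qed.

End Union.

Section GSL.
Context {G : Type}.
Variable ar : G -> nat.

Definition memb (n : nat) (S : list nat) : bool := existsb (Nat.eqb n) S.

Lemma memb_In n S : memb n S = true <-> In n S.
Proof.
  unfold memb; rewrite existsb_exists; split.
  - intros [x [Hx Hx']]; apply Nat.eqb_eq in Hx'; subst; auto.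
  - intros; exists n; rewrite Nat.eqb_refl; auto.
Qed.

Lemma memb_notIn n S : memb n S = false <-> ~ In n S.
Proof.
  rewrite <- memb_In. destruct (memb n S); split; intros; try discriminate; auto; congruence.
Qed.

Definition keptf (S : list nat) (p : nat * ty G) : bool := negb (memb (fst p) S).

Definition kept (f : nat -> term G) (S : list nat) (B : base G) : base G :=
  map (fun p => (fst p, subst_ty f (snd p))) (filter (keptf S) B).

Lemma filter_perm {A : Type} (P : A -> bool) l1 l2 : Permutation l1 l2 -> Permutation (filter P l1) (filter P l2).
Proof.
  intro H; induction H; simpl; auto.
  - destruct (P x); auto.
  - destruct (P x), (P y); auto. apply perm_swap.
  - eapply perm_trans; eauto.
Qed.

Lemma kept_perm f S B1 B2 : Permutation B1 B2 -> Permutation (kept f S B1) (kept f S B2).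
Proof. intros; unfold kept; apply Permutation_map; apply filter_perm; auto. Qed.

Lemma kept_cons_notin f S x s B : ~ In x S -> kept f S ((x, s) :: B) = (x, subst_ty f s) :: kept f S B.
Proof.
  intros; unfold kept; simpl. unfold keptf at 1; simpl.
  apply memb_notIn in H; rewrite H; simpl; auto.
Qed.

Lemma kept_cons_in f S x s B : In x S -> kept f S ((x, s) :: B) = kept f S B.
Proof.
  intros; unfold kept; simpl. unfold keptf at 1; simpl.
  apply memb_In in H; rewrite H; simpl; auto.
Qed.

Lemma kept_in f S B p : In p (kept f S B) -> exists q, In q B /\ ~ In (fst q) S /\ p = (fst q, subst_ty f (snd q)).
Proof.
  unfold kept; intro H; apply in_map_iff in H; destruct H as [q [Hq Hq']].
  apply filter_In in Hq'; destruct Hq'. exists q; split; auto. split; auto.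
  unfold keptf in H0. apply negb_true_iff in H0. apply memb_notIn; auto.
Qed.

Lemma kept_fst f S B : map fst (kept f S B) = map fst (filter (keptf S) B).
Proof. unfold kept; rewrite map_map; simpl; auto. Qed.

Lemma NoDup_map_filter {A B : Type} (g : A -> B) (P : A -> bool) l : NoDup (map g l) -> NoDup (map g (filter P l)).
Proof.
  induction l; simpl; intros; auto.
  inversion H; subst. destruct (P a); simpl; auto. constructor; auto.
  intro Hc; apply H2. apply in_map_iff in Hc; destruct Hc as [y [Hy Hy']].
  apply filter_In in Hy'; destruct Hy'. apply in_map_iff; eauto.
Qed.

Lemma kept_NoDup f S B : NoDup (map fst B) -> NoDup (map fst (kept f S B)).
Proof. intros; rewrite kept_fst; apply NoDup_map_filter; auto. Qed.

Lemma kept_fst_in f S B n : In n (map fst (kept f S B)) -> In n (map fst B) /\ ~ In n S.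
Proof.
  intro H; apply in_map_iff in H; destruct H as [p [Hp Hp']]; subst.
  apply kept_in in Hp'; destruct Hp' as [q [Hq [Hq' Hq'']]]; subst; simpl; split; auto.
  apply in_map; auto.
Qed.

Lemma kept_CF f S B : (forall p, In p B -> CF (snd p) = true) -> forall p, In p (kept f S B) -> CF (snd p) = true.
Proof.
  intros H p Hp; apply kept_in in Hp; destruct Hp as [q [Hq [_ Hq']]]; subst; simpl.
  rewrite CF_subst; auto.
Qed.

Lemma fv_subst_keep f S (t : term G) x :
  (forall n, In n S -> fv_t (f n) = []) -> (forall n, ~ In n S -> f n = FVar n) ->
  In x (fv_t (subst_t f t)) -> In x (fv_t t).
Proof.
  intros H1 H2 H. destruct ((proj1 fv_subst_all) t f x H) as [m [Hm Hm']].
  destruct (in_dec Nat.eq_dec m S).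
  - rewrite H1 in Hm'; auto; contradiction.
  - rewrite H2 in Hm'; auto. simpl in Hm'; destruct Hm'; subst; tauto.
Qed.

Lemma fv_subst_keep_ty f S (t : ty G) x :
  (forall n, In n S -> fv_t (f n) = []) -> (forall n, ~ In n S -> f n = FVar n) ->
  In x (fv_ty (subst_ty f t)) -> In x (fv_ty t).
Proof.
  intros H1 H2 H. destruct ((proj2 fv_subst_all) t f x H) as [m [Hm Hm']].
  destruct (in_dec Nat.eq_dec m S).
  - rewrite H1 in Hm'; auto; contradiction.
  - rewrite H2 in Hm'; auto. simpl in Hm'; destruct Hm'; subst; tauto.
Qed.


Definition GHyp (f : nat -> term G) (S : list nat) (B : base G) : Prop :=
  lcf f /\ (forall n, ~ In n S -> f n = FVar n) /\ (forall n, In n S -> In n (map fst B)) /\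
  (forall n, In n S -> fv_t (f n) = []) /\
  (forall y s, In (y, s) B -> In y S ->
     fv_ty (subst_ty f s) = [] /\ inhabited (typing ar [] (f y) (subst_ty f s))).

Lemma GHyp_lam f S B x s : GHyp f S B -> ~ In x (map fst B) -> GHyp f S ((x, s) :: B) /\ ~ In x S.
Proof.
  intros [H1 [H2 [H3 [H4 H5]]]] Hx.
  assert (~ In x S) by (intro; apply Hx; auto).
  split; auto. split; auto. split; auto. split; [intros; right; auto|]. split; auto.
  intros y s0 [Hy|Hy] Hy'; [inversion Hy; subst; tauto| eauto].
Qed.

Lemma GSL_all :
  (forall B M t (D : typing ar B M t), forall f S, GHyp f S B ->
     inhabited (typing ar (kept f S B) (subst_t f M) (subst_ty f t))) /\
  (forall B s (W : wft ar B s), forall f S, GHyp f S B ->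
     inhabited (wft ar (kept f S B) (subst_ty f s))).
Proof.
  apply (typing_wft_ind G ar
    (fun B M t D => forall f S, GHyp f S B ->
       inhabited (typing ar (kept f S B) (subst_t f M) (subst_ty f t)))
    (fun B s W => forall f S, GHyp f S B -> inhabited (wft ar (kept f S B) (subst_ty f s))));
  intros; simpl.
  -
    assert (HCF := selfwft_CF ar B w).
    assert (Hnd : NoDup (map fst B')) by (eapply Permutation_NoDup; [apply Permutation_map; apply Permutation_sym; eauto| auto]).
    destruct H1 as [Hf1 [Hf2 [Hf3 [Hf4 Hf5]]]].
    destruct (in_dec Nat.eq_dec x S) as [Hx|Hx].
    + destruct (Hf5 x s) as [Hfv [Dx]]; auto. { eapply Permutation_in; [apply Permutation_sym; eauto| left; auto]. }
      assert (HXCF : forall p0, In p0 (kept f S B') -> CF (snd p0) = true).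
      { intros p0 Hp0. apply kept_in in Hp0. destruct Hp0 as [q [Hq [Hq' Hq'']]]; subst; simpl.
        rewrite CF_subst. apply Permutation_in with (l' := (x, s) :: B) in Hq; auto.
        destruct Hq; [subst; simpl in Hq'; tauto| auto]. }
      destruct (rename_avoid ar (map fst (kept f S B')) _ _ Dx (Hf4 x Hx) Hfv) as [D' HD'].
      assert (HND : NoDup (map fst ([] ++ kept f S B'))) by (simpl; apply kept_NoDup; auto).
      destruct ((proj1 (union_all ar)) _ _ _ D' (kept f S B') HXCF HND HD') as [D''].
      constructor; exact D''.
    + assert (GHyp f S B).
      { split; auto. split; auto. split.
        - intros n0 Hn0. specialize (Hf3 n0 Hn0).
          apply (Permutation_in _ (Permutation_map fst p)) in Hf3. destruct Hf3; subst; tauto.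
        - split; auto. intros; apply Hf5; auto. eapply Permutation_in; [apply Permutation_sym; eauto| right; auto]. }
      destruct (H0 f S H1) as [w'].
      rewrite (Hf2 x Hx). constructor.
      apply (T_var ar (kept f S B) (kept f S B') x (subst_ty f s)).
      * rewrite <- kept_cons_notin with (x := x) (s := s) by auto; apply kept_NoDup; auto.
      * rewrite <- kept_cons_notin by auto. apply kept_perm; auto.
      * intros p0 Hp0. apply cf_wft. eapply kept_CF; eauto.
      * auto.
  -
    destruct (GHyp_lam f S B x s H0 n) as [HG Hx].
    destruct (H f S HG) as [D1].
    destruct H0 as [Hf1 [Hf2 [Hf3 [Hf4 Hf5]]]].
    rewrite kept_cons_notin in D1 by auto.
    rewrite subst_open_t, subst_open_ty in D1 by auto. simpl in D1. rewrite (Hf2 x Hx) in D1.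
    constructor. apply (T_lam ar (kept f S B) x (subst_ty f s) (subst_t f N) (subst_ty f t)); auto.
    + intro Hc; apply kept_fst_in in Hc; tauto.
    + intro Hc; apply (fv_subst_keep f S) in Hc; auto.
    + intro Hc; apply (fv_subst_keep_ty f S) in Hc; auto.
  - destruct (H f S H1) as [D1], (H0 f S H1) as [D2].
    destruct H1 as [Hf1 _].
    rewrite subst_open_ty by auto. constructor. eapply T_app; eauto.
  - assert (HCF := selfwft_CF ar B w).
    destruct (const_subst ar f _ _ c0) as [E1 E2]. rewrite E1, E2.
    constructor. apply T_const; auto.
    + apply kept_NoDup; auto.
    + intros p0 Hp0. apply cf_wft. eapply kept_CF; eauto.
  - destruct (H f S H0) as [D1]; constructor; apply T_ifc; auto.
  - assert (HCF := selfwft_CF ar B w).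
    destruct (H0 f S H1) as [w'].
    destruct H1 as [Hf1 _].
    constructor. apply T_Y; auto.
    + apply kept_NoDup; auto.
    + intros p0 Hp0. apply cf_wft. eapply kept_CF; eauto.
    + apply yshape_subst; auto.
  - destruct (H f S H0) as [D1]; constructor; apply T_idxnat; auto.
  - destruct (H f S H1) as [D1], (H0 f S H1) as [D2]; constructor; apply T_op; auto.
  - destruct (H f S H0) as [D1]; constructor; eapply T_size; eauto.
  - destruct (H f S H0) as [D1]; constructor; apply T_seq; auto.
  - destruct (H f S H1) as [D1], (H0 f S H1) as [D2]; constructor; apply T_par; auto.
  - destruct (H f S H0) as [D1]; constructor; apply T_rev; auto.
  - destruct (H f S H1) as [D1], (H0 f S H1) as [D2]; constructor; apply T_iter; auto.
  - destruct (H f S H0) as [D1]; constructor; apply T_dmeas; auto.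
  - destruct (H f S H0) as [D1]. destruct H0 as [Hf1 _].
    constructor; eapply T_conv; eauto. apply tyeq_subst; auto.
  - constructor; apply W_nat.
  - constructor; apply W_idx.
  - destruct (H f S H0) as [D1]; constructor; apply W_circ; auto.
  - destruct (GHyp_lam f S B x s H1 n) as [HG Hx].
    destruct (H f S H1) as [W1].
    destruct (H0 f S HG) as [W2].
    destruct H1 as [Hf1 [Hf2 [Hf3 [Hf4 Hf5]]]].
    rewrite kept_cons_notin in W2 by auto.
    rewrite subst_open_ty in W2 by auto. simpl in W2. rewrite (Hf2 x Hx) in W2.
    constructor. apply (W_pi ar (kept f S B) x (subst_ty f s) (subst_ty f t)); auto.
    + intro Hc; apply kept_fst_in in Hc; tauto.
    + intro Hc; apply (fv_subst_keep_ty f S) in Hc; auto.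
Qed.

End GSL.

Section LR.
Context {G : Type}.
Variable ar : G -> nat.
Variable dag : G -> G.
Variable mprob : nat -> term G -> nat -> nat -> R.

Definition goodE (E : term G) : Prop :=
  exists E' k, tyeq (TCirc E) (TCirc E') /\ eval ar dag mprob E' 1%R (Num k).

Fixpoint Rf (n : nat) (t : ty G) (M : term G) {struct n} : Prop :=
  match n with
  | 0 => False
  | S n' =>
    closed M /\ inhabited (typing ar [] M t) /\
    match t with
    | TNat => True
    | TIdx => exists k, eval ar dag mprob M 1%R (Num k)
    | TCirc E => goodE E
    | TPi a b => forall N, Rf n' a N -> Rf n' (open_ty 0 N b) (App M N)
    end
  end.

Definition Red (t : ty G) (M : term G) : Prop := Rf (tsize t) t M.

Lemma Rf_fuel n : forall m t M, tsize t <= n -> tsize t <= m -> (Rf n t M <-> Rf m t M).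
Proof.
  induction n; intros m t M H1 H2.
  - pose proof (tsize_pos t); lia.
  - destruct m; [pose proof (tsize_pos t); lia|].
    simpl. destruct t; try tauto.
    simpl in H1, H2.
    assert (forall N, (Rf n t1 N -> Rf n (open_ty 0 N t2) (App M N)) <->
                      (Rf m t1 N -> Rf m (open_ty 0 N t2) (App M N))).
    { intro N. rewrite (IHn m t1 N) by lia. rewrite (IHn m (open_ty 0 N t2) (App M N)) by (rewrite tsize_open; lia).
      tauto. }
    split; intros [? [? ?]]; split; auto; split; auto; intros; apply H; auto.
Qed.

Lemma Rf_Red n t M : tsize t <= n -> (Rf n t M <-> Red t M).
Proof. intros; unfold Red; apply Rf_fuel; lia. Qed.

Lemma Red_closed t M : Red t M -> closed M.
Proof. unfold Red; destruct (tsize t) eqn:E; simpl; [pose proof (tsize_pos t); lia| tauto]. Qed.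

Lemma Red_typing t M : Red t M -> inhabited (typing ar [] M t).
Proof. unfold Red; destruct (tsize t) eqn:E; simpl; [pose proof (tsize_pos t); lia| tauto]. Qed.

Lemma Red_nat M : Red TNat M <-> closed M /\ inhabited (typing ar [] M TNat).
Proof. unfold Red; simpl; tauto. Qed.

Lemma Red_idx M : Red TIdx M <-> closed M /\ inhabited (typing ar [] M TIdx) /\ exists k, eval ar dag mprob M 1%R (Num k).
Proof. unfold Red; simpl; tauto. Qed.

Lemma Red_circ E M : Red (TCirc E) M <-> closed M /\ inhabited (typing ar [] M (TCirc E)) /\ goodE E.
Proof. unfold Red; simpl; tauto. Qed.

Lemma Red_pi a b M : Red (TPi a b) M <-> closed M /\ inhabited (typing ar [] M (TPi a b)) /\
   forall N, Red a N -> Red (open_ty 0 N b) (App M N).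
Proof.
  unfold Red at 1; simpl.
  assert (forall N, (Rf (tsize a + tsize b) a N -> Rf (tsize a + tsize b) (open_ty 0 N b) (App M N)) <->
                    (Red a N -> Red (open_ty 0 N b) (App M N))).
  { intro N. rewrite (Rf_Red _ a N) by lia. rewrite (Rf_Red _ (open_ty 0 N b) (App M N)) by (rewrite tsize_open; lia). tauto. }
  split; intros [? [? ?]]; split; auto; split; auto; intros; apply H; auto.
Qed.


Definition TR (u v : ty G) : Prop :=
  match u, v with
  | TNat, TNat => True
  | TIdx, TIdx => True
  | TCirc E, TCirc E' => clos_refl_sym_trans _ tstep E E'
  | TPi a b, TPi a' b' => tyeq a a' /\ forall N, lc_t 0 N -> tyeq (open_ty 0 N b) (open_ty 0 N b')
  | _, _ => False
  end.

Lemma tystep_open_subst (b b' : ty G) x N : ~ In x (fv_ty b) -> ~ In x (fv_ty b') -> lc_t 0 N ->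
  tystep (open_ty 0 (FVar x) b) (open_ty 0 (FVar x) b') -> tystep (open_ty 0 N b) (open_ty 0 N b').
Proof.
  intros H1 H2 HN H.
  assert (Hf : lcf (upd FVar x N)) by (apply lcf_upd; auto; intro; simpl; auto).
  apply (proj2 step_subst_all) with (f := upd FVar x N) in H; auto.
  rewrite !subst_open_ty in H by auto.
  rewrite !subst_upd_fresh_ty in H by auto.
  rewrite !(proj2 subst_var_all) in H. simpl in H. unfold upd in H. rewrite Nat.eqb_refl in H. auto.
Qed.

Lemma tyeq_TR (u v : ty G) : tyeq u v -> TR u v.
Proof.
  intro H; induction H.
  - destruct H; simpl; auto.
    + apply rst_step; auto.
    + split; [apply rst_step; auto| intros; apply rst_refl].
    + split; [apply rst_refl|]. intros; apply rst_step; eapply tystep_open_subst; eauto.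
  - destruct x; simpl; auto; try apply rst_refl. split; intros; apply rst_refl.
  - destruct x, y; simpl in *; try tauto; try (apply rst_sym; auto; fail). destruct IHclos_refl_sym_trans as [Ha Hb]; split; [apply rst_sym; auto| intros; apply rst_sym; apply Hb; auto].
  - destruct x, y, z; simpl in *; auto; try tauto; try (eapply rst_trans; eauto; fail).
    destruct IHclos_refl_sym_trans1 as [Ha Hb], IHclos_refl_sym_trans2 as [Ha2 Hb2]; split; [eapply rst_trans; eauto| intros; eapply rst_trans; [apply Hb| apply Hb2]; auto].
Qed.

Lemma Rf_closed n t M : Rf n t M -> closed M.
Proof. destruct n; simpl; tauto. Qed.

Lemma Rf_conv n : forall t t' M, tsize t <= n -> tyeq t t' -> Rf n t M -> Rf n t' M.
Proof.
  induction n; intros t t' M Hs He H; [simpl in H; tauto|].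
  assert (HT := tyeq_TR _ _ He).
  simpl in H |- *. destruct H as [Hc [[D] H]]. split; auto. split; [constructor; eapply T_conv; eauto|].
  destruct t, t'; simpl in HT; try tauto.
  - unfold goodE in *. destruct H as [E' [k [H1 H2]]]. exists E', k; split; auto.
    eapply rst_trans; [apply rst_sym; eauto| auto].
  - destruct HT as [Ha Hb]. simpl in Hs. intros N HN.
    assert (Hs' : tsize t'1 = tsize t1) by (symmetry; apply (tyeq_shape _ _ Ha)).
    apply IHn with (t := open_ty 0 N t2).
    + rewrite tsize_open; lia.
    + apply Hb. apply Rf_closed in HN; destruct HN; auto.
    + apply H. apply IHn with (t := t'1); auto; [lia| apply rst_sym; auto].
Qed.

Lemma Red_conv t t' M : tyeq t t' -> Red t M -> Red t' M.
Proof.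
  intros He H. unfold Red in *.
  assert (tsize t = tsize t') by apply (tyeq_shape _ _ He).
  rewrite <- H0. eapply Rf_conv; eauto.
Qed.

Lemma apps_snoc (M N : term G) Ps : apps M (Ps ++ [N]) = App (apps M Ps) N.
Proof. revert M; induction Ps; simpl; intros; auto. Qed.

Lemma closed_app (M N : term G) : closed (App M N) <-> closed M /\ closed N.
Proof.
  unfold closed; simpl; split.
  - intros [H1 [H2 H3]]. apply app_eq_nil in H1; tauto.
  - intros [[H1 H2] [H3 H4]]; rewrite H1, H3; auto.
Qed.

Lemma HE n : forall t s0 (N0 Q : term G) Ps, tsize t <= n ->
  closed (apps (App (Lam s0 N0) Q) Ps) -> inhabited (typing ar [] (apps (App (Lam s0 N0) Q) Ps) t) ->
  Rf n t (apps (open_t 0 Q N0) Ps) -> Rf n t (apps (App (Lam s0 N0) Q) Ps).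
Proof.
  induction n; intros t s0 N0 Q Ps Hs Hc HD H; [simpl in H; tauto|].
  simpl in H |- *. destruct H as [Hc' [HD' H]]. split; auto. split; auto.
  destruct t; auto.
  - destruct H as [k Hk]; exists k. apply E_beta; auto.
  - intros N HN. simpl in Hs.
    rewrite <- !apps_snoc. apply IHn.
    + rewrite tsize_open; lia.
    + rewrite apps_snoc; apply closed_app; split; auto. eapply Rf_closed; eauto.
    + rewrite apps_snoc. destruct HD as [D].
      destruct n; [simpl in HN; tauto|]. destruct HN as [_ [[DN] _]].
      constructor; eapply T_app; eauto.
    + rewrite apps_snoc; apply H; auto.
Qed.

Lemma Red_HE t s0 (N0 Q : term G) :
  closed (App (Lam s0 N0) Q) -> inhabited (typing ar [] (App (Lam s0 N0) Q) t) ->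
  Red t (open_t 0 Q N0) -> Red (t) (App (Lam s0 N0) Q).
Proof.
  intros. unfold Red in *. apply (HE _ t s0 N0 Q []); auto.
Qed.

Fixpoint GoodY (s : ty G) : Prop :=
  match s with
  | TCirc E => goodE E
  | TPi a b => (exists N, Red a N) -> GoodY b
  | _ => True
  end.

Lemma YRed (s : ty G) : yshape s -> GoodY s -> forall M, closed M -> inhabited (typing ar [] M s) -> Red s M.
Proof.
  intro Hy; induction Hy; intros HG M Hc HD.
  - apply Red_nat; auto.
  - apply Red_circ; auto.
  - apply Red_pi; split; auto; split; auto.
    intros N HN. rewrite open_lc0_ty by auto. apply IHHy.
    + apply HG; eauto.
    + apply closed_app; split; auto; eapply Red_closed; eauto.
    + destruct HD as [D]. destruct (Red_typing _ _ HN) as [DN].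
      constructor. pose proof (T_app ar [] M N a b D DN) as D'. rewrite open_lc0_ty in D' by auto. exact D'.
Qed.

End LR.

Ltac ys := repeat match goal with
 | |- yshape (TPi _ _) => apply YS_arr
 | |- yshape TNat => apply YS_nat
 | |- yshape (TCirc _) => apply YS_circ
 | |- lc_ty _ _ => progress simpl
 | |- _ /\ _ => split
 | |- True => exact I
 | H : lc_t 0 ?e |- lc_t _ ?e => eapply (proj1 lc_mono_all); [exact H| lia]
 end.

Section FL.
Context {G : Type}.
Variable ar : G -> nat.
Variable dag : G -> G.
Variable mprob : nat -> term G -> nat -> nat -> R.

Notation Red := (Red ar dag mprob).
Notation goodE := (goodE ar dag mprob).

Definition CleanB (B : base G) : Prop :=
  forall p, In p B -> forall n, In n (fv_ty (snd p)) -> In n (map fst B).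

Definition Good (g : nat -> term G) (B : base G) : Prop :=
  lcf g /\ (forall n, ~ In n (map fst B) -> g n = FVar n) /\
  (forall y s, In (y, s) B -> Red (subst_ty g s) (g y)).

Lemma nil_of_nomem (l : list nat) : (forall n, ~ In n l) -> l = [].
Proof. destruct l; auto. intro H; exfalso; apply (H n); left; auto. Qed.

Lemma Good_dom_closed g B n : Good g B -> In n (map fst B) -> closed (g n).
Proof.
  intros [_ [_ H]] Hn. apply in_map_iff in Hn. destruct Hn as [[y s] [Hy Hy']]; simpl in Hy; subst.
  eapply Red_closed; eauto.
Qed.

Lemma Good_fv_ty g B (s : ty G) : Good g B -> (forall n, In n (fv_ty s) -> In n (map fst B)) ->
  fv_ty (subst_ty g s) = [].
Proof.
  intros HG Hs. apply nil_of_nomem; intros n Hn.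
  destruct ((proj2 fv_subst_all) s g n Hn) as [m [Hm Hm']].
  destruct (Good_dom_closed g B m HG (Hs m Hm)) as [Hc _]. rewrite Hc in Hm'; auto.
Qed.

Lemma Good_fv_t g B (s : term G) : Good g B -> (forall n, In n (fv_t s) -> In n (map fst B)) ->
  fv_t (subst_t g s) = [].
Proof.
  intros HG Hs. apply nil_of_nomem; intros n Hn.
  destruct ((proj1 fv_subst_all) s g n Hn) as [m [Hm Hm']].
  destruct (Good_dom_closed g B m HG (Hs m Hm)) as [Hc _]. rewrite Hc in Hm'; auto.
Qed.

Lemma Good_GHyp g B : CleanB B -> Good g B -> GHyp ar g (map fst B) B.
Proof.
  intros HC HG. pose proof HG as [H1 [H2 H3]].
  split; auto. split; auto. split; auto. split.
  - intros n Hn; apply (Good_dom_closed g B n HG Hn).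
  - intros y s Hy _. split.
    + apply (Good_fv_ty g B s HG). intros n Hn; apply (HC (y, s) Hy n Hn).
    + apply (Red_typing ar dag mprob); auto.
Qed.

Lemma kept_all f S (B : base G) : (forall p, In p B -> In (fst p) S) -> kept f S B = [].
Proof.
  intros H; unfold kept. induction B; simpl; auto.
  unfold keptf at 1. rewrite (proj2 (memb_In _ _) (H a (or_introl eq_refl))). simpl.
  apply IHB; intros; apply H; right; auto.
Qed.

Lemma GSL_closed B M t (D : typing ar B M t) g : CleanB B -> Good g B ->
  inhabited (typing ar [] (subst_t g M) (subst_ty g t)).
Proof.
  intros HC HG. destruct ((proj1 (GSL_all ar)) B M t D g (map fst B) (Good_GHyp g B HC HG)) as [D'].
  rewrite kept_all in D'; [constructor; auto|]. intros; apply in_map; auto.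
Qed.

Lemma closed_subst B M t (D : typing ar B M t) g : Good g B -> (forall n, In n (fv_t M) -> In n (map fst B)) ->
  closed (subst_t g M).
Proof.
  intros HG Hf. split.
  - eapply Good_fv_t; eauto.
  - destruct HG as [H1 _]. apply (proj1 (lc_subst_all g H1)). eapply typing_lc; eauto.
Qed.

Lemma goodE_ev E k : eval ar dag mprob E 1%R (Num k) -> goodE E.
Proof. intros; exists E, k; split; auto; apply rst_refl. Qed.

Lemma rst_circ (a b : term G) : clos_refl_sym_trans _ tstep a b -> tyeq (TCirc a) (TCirc b).
Proof.
  intro H; induction H.
  - apply rst_step; apply S_circ; auto.
  - apply rst_refl.
  - apply rst_sym; auto.
  - eapply rst_trans; eauto.
Qed.

Lemma rst_op1 o (a a' b : term G) : clos_refl_sym_trans _ tstep a a' ->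
  clos_refl_sym_trans _ tstep (Op o a b) (Op o a' b).
Proof.
  intro H; induction H.
  - apply rst_step; apply S_op1; auto.
  - apply rst_refl.
  - apply rst_sym; auto.
  - eapply rst_trans; eauto.
Qed.

Lemma rst_op2 o (a b b' : term G) : clos_refl_sym_trans _ tstep b b' ->
  clos_refl_sym_trans _ tstep (Op o a b) (Op o a b').
Proof.
  intro H; induction H.
  - apply rst_step; apply S_op2; auto.
  - apply rst_refl.
  - apply rst_sym; auto.
  - eapply rst_trans; eauto.
Qed.

Lemma goodE_op o E0 E1 : goodE E0 -> goodE E1 -> goodE (Op o E0 E1).
Proof.
  intros [E0' [k0 [H0 H0']]] [E1' [k1 [H1 H1']]].
  exists (Op o E0' E1'), (opfun o k0 k1). split.
  - apply rst_circ. apply tyeq_TR in H0; apply tyeq_TR in H1; simpl in *.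
    eapply rst_trans; [apply rst_op1; eauto| apply rst_op2; eauto].
  - replace 1%R with (1 * 1)%R by ring. apply E_op; auto.
Qed.


Lemma Red_circ_good E M : Red (TCirc E) M -> goodE E.
Proof. intro H; destruct (proj1 (Red_circ ar dag mprob _ _) H) as [_ [_ HE]]; exact HE. Qed.

Lemma Good_upd g B x s N : Good g B -> CleanB B -> ~ In x (map fst B) ->
  (forall n, In n (fv_ty s) -> In n (map fst B)) -> Red (subst_ty g s) N ->
  Good (upd g x N) ((x, s) :: B) /\ CleanB ((x, s) :: B).
Proof.
  intros [H1 [H2 H3]] HC Hx Hs HN.
  assert (Hfr : forall (t : ty G), (forall n, In n (fv_ty t) -> In n (map fst B)) -> subst_ty (upd g x N) t = subst_ty g t).
  { intros t Ht; apply subst_upd_fresh_ty; intro; apply Hx; auto. }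
  split; [split; [|split]|].
  - apply lcf_upd; auto. destruct (Red_closed _ _ _ _ _ HN); auto.
  - intros n Hn. unfold upd. destruct (Nat.eqb_spec n x); subst; [exfalso; apply Hn; left; auto|].
    apply H2; intro; apply Hn; right; auto.
  - intros y s0 [Hy|Hy].
    + inversion Hy; subst. rewrite Hfr; auto. unfold upd; rewrite Nat.eqb_refl; auto.
    + rewrite Hfr by (intros; eapply HC; eauto).
      unfold upd. destruct (Nat.eqb_spec y x); subst; [exfalso; apply Hx; eapply in_fst; eauto|]. auto.
  - intros p [Hp|Hp] n Hn; subst; simpl in *; right; eauto.
Qed.

Lemma FL_all :
  (forall B M t (D : typing ar B M t), CleanB B -> (forall n, In n (fv_t M) -> In n (map fst B)) ->
     forall g, Good g B -> Red (subst_ty g t) (subst_t g M)) /\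
  (forall B s (W : wft ar B s), yshape s -> CleanB B -> (forall n, In n (fv_ty s) -> In n (map fst B)) ->
     forall g, Good g B -> GoodY ar dag mprob (subst_ty g s)).
Proof.
  apply (typing_wft_ind G ar
    (fun B M t D => CleanB B -> (forall n, In n (fv_t M) -> In n (map fst B)) ->
     forall g, Good g B -> Red (subst_ty g t) (subst_t g M))
    (fun B s W => yshape s -> CleanB B -> (forall n, In n (fv_ty s) -> In n (map fst B)) ->
     forall g, Good g B -> GoodY ar dag mprob (subst_ty g s))).
  -
    intros B B' x s n p w IHW w0 IHw0 HC Hf g HG. simpl.
    destruct HG as [_ [_ HG]]. apply HG. eapply Permutation_in; [apply Permutation_sym; eauto| left; auto].
  -
    intros B x s N t n n0 n1 t0 IH HC Hf g HG. simpl.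
    pose (D := T_lam ar B x s N t n n0 n1 t0).
    destruct (GSL_closed _ _ _ D g HC HG) as [DL]. simpl in DL.
    assert (HcL := closed_subst _ _ _ D g HG Hf). simpl in HcL.
    apply Red_pi. split; auto. split; [constructor; auto|].
    intros Q HQ.
    assert (Hs : forall n, In n (fv_ty s) -> In n (map fst B)) by (intros; apply Hf; simpl; apply in_or_app; auto).
    destruct (Good_upd g B x s Q HG HC n Hs HQ) as [HG' HC'].
    assert (HcQ := Red_closed _ _ _ _ _ HQ).
    apply Red_HE.
    + apply closed_app; auto.
    + destruct (Red_typing _ _ _ _ _ HQ) as [DQ]. constructor; eapply T_app; eauto.
    + assert (Hf' : forall n0, In n0 (fv_t (open_t 0 (FVar x) N)) -> In n0 (map fst ((x, s) :: B))).
      { intros m Hm. apply (proj1 fv_open_sub_all) in Hm. simpl in *. destruct Hm as [Hm|[Hm|[]]]; auto.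
        right; apply Hf; apply in_or_app; auto. }
      specialize (IH HC' Hf' _ HG').
      destruct HG as [Hl _].
      assert (Hl' : lcf (upd g x Q)) by (apply lcf_upd; auto; destruct HcQ; auto).
      rewrite subst_open_t, subst_open_ty in IH by auto.
      rewrite (subst_upd_fresh_t g x Q N n0), (subst_upd_fresh_ty g x Q t n1) in IH.
      simpl in IH. replace (upd g x Q x) with Q in IH by (unfold upd; rewrite Nat.eqb_refl; auto). auto.
  -
    intros B P Q s t t0 IH0 t1 IH1 HC Hf g HG. simpl.
    assert (H0 := IH0 HC (fun n H => Hf n (in_or_app _ _ _ (or_introl H))) g HG).
    assert (H1 := IH1 HC (fun n H => Hf n (in_or_app _ _ _ (or_intror H))) g HG).
    simpl in H0. apply Red_pi in H0. destruct H0 as [_ [_ H0]].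
    destruct HG as [Hl _]. rewrite subst_open_ty by auto. auto.
  -
    intros B c s n w IHW c0 HC Hf g HG.
    destruct (const_subst ar g _ _ c0) as [E1 E2]. rewrite E1, E2.
    assert (Dc : typing ar [] c s) by (apply T_const; auto; [constructor| intros p []]).
    assert (Hcc : closed c) by (destruct c0; split; simpl; auto).
    destruct c0.
    + apply YRed; auto; repeat constructor; simpl; auto.
    + apply YRed; auto; repeat constructor; simpl; auto.
    + apply YRed; auto; repeat constructor; simpl; auto.
    + apply YRed; auto; repeat constructor; simpl; auto.
    + apply YRed; auto; repeat constructor; simpl; auto.
    + apply Red_idx; split; auto; split; [constructor; auto| exists n0; constructor].
    + apply Red_circ; split; auto; split; [constructor; auto| apply goodE_ev with (k := ar g0); constructor].
  -
    intros B E t IH HC Hf g HG.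
    destruct (GSL_closed _ _ _ (T_ifc ar B E t) g HC HG) as [DI].
    assert (HlE : lc_t 0 (subst_t g E)) by (destruct HG as [Hl _]; apply (proj1 (lc_subst_all g Hl)); eapply typing_lc; eauto).
    simpl in *. apply YRed; auto.
    + ys.
    + simpl. intros _ [N HN] _. destruct (proj1 (Red_circ ar dag mprob _ _) HN) as [_ [_ HE]]; exact HE.
    + split; simpl; auto.
  -
    intros B s n w IHW w0 IHw0 y HC Hf g HG.
    destruct (GSL_closed _ _ _ (T_Y ar B s n w w0 y) g HC HG) as [DY].
    assert (HcY := closed_subst _ _ _ (T_Y ar B s n w w0 y) g HG Hf).
    assert (Hls : lc_ty 0 (subst_ty g s)) by (destruct HG as [Hl _]; apply (proj2 (lc_subst_all g Hl)); eapply wft_lc; eauto).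
    assert (HGY := IHw0 y HC Hf g HG).
    simpl in *. apply Red_pi. split; auto. split; [constructor; auto|].
    intros F HF. rewrite open_lc0_ty by auto.
    destruct HG as [Hl _].
    apply YRed; auto.
    + apply yshape_subst; auto.
    + apply closed_app; split; auto. eapply Red_closed; eauto.
    + destruct (Red_typing _ _ _ _ _ HF) as [DF]. constructor.
      pose proof (T_app ar [] _ _ _ _ DY DF) as D'. rewrite open_lc0_ty in D' by auto. exact D'.
  -
    intros B M t IH HC Hf g HG.
    specialize (IH HC Hf g HG). apply Red_idx in IH. destruct IH as [Hc [[D] _]].
    apply Red_nat; split; auto. constructor; apply T_idxnat; auto.
  -
    intros B o E0 E1 t IH0 t0 IH1 HC Hf g HG. simpl.
    assert (HcO := closed_subst _ _ _ (T_op ar B o E0 E1 t t0) g HG Hf).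
    assert (H0 := IH0 HC (fun n H => Hf n (in_or_app _ _ _ (or_introl H))) g HG).
    assert (H1 := IH1 HC (fun n H => Hf n (in_or_app _ _ _ (or_intror H))) g HG).
    apply Red_idx in H0; apply Red_idx in H1.
    destruct H0 as [_ [[D0] [k0 H0]]], H1 as [_ [[D1] [k1 H1]]].
    apply Red_idx; split; auto. split; [constructor; apply T_op; auto|].
    exists (opfun o k0 k1). replace 1%R with (1 * 1)%R by ring. apply E_op; auto.
  -
    intros B M E t IH HC Hf g HG. simpl.
    assert (HcS := closed_subst _ _ _ (T_size ar B M E t) g HG Hf).
    assert (H0 := IH HC (fun n H => Hf n (in_or_app _ _ _ (or_intror H))) g HG).
    simpl in H0. apply Red_circ in H0. destruct H0 as [_ [[D] [E' [k [Heq Hev]]]]].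
    apply Red_idx; split; auto. split; [constructor; eapply T_size; eauto|].
    exists k. apply E_size with (E := E'); [constructor; eapply T_conv; eauto| exact Hev].
  -
    intros B E t IH HC Hf g HG.
    destruct (GSL_closed _ _ _ (T_seq ar B E t) g HC HG) as [DI].
    assert (HlE : lc_t 0 (subst_t g E)) by (destruct HG as [Hl _]; apply (proj1 (lc_subst_all g Hl)); eapply typing_lc; eauto).
    simpl in *. apply YRed; auto.
    + ys.
    + simpl. intros [N HN] _. eapply Red_circ_good; eauto.
    + split; simpl; auto.
  -
    intros B E0 E1 t IH0 t0 IH1 HC Hf g HG.
    destruct (GSL_closed _ _ _ (T_par ar B E0 E1 t t0) g HC HG) as [DI].
    assert (HlE0 : lc_t 0 (subst_t g E0)) by (destruct HG as [Hl _]; apply (proj1 (lc_subst_all g Hl)); eapply typing_lc; eauto).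
    assert (HlE1 : lc_t 0 (subst_t g E1)) by (destruct HG as [Hl _]; apply (proj1 (lc_subst_all g Hl)); eapply typing_lc; eauto).
    simpl in *. apply YRed; auto.
    + ys.
    + simpl. intros [N0 HN0] [N1 HN1]. apply Red_circ_good in HN0; apply Red_circ_good in HN1.
      apply goodE_op; [apply goodE_op; auto|]. apply goodE_ev with (k := 1); constructor.
    + split; simpl; auto.
  -
    intros B E t IH HC Hf g HG.
    destruct (GSL_closed _ _ _ (T_rev ar B E t) g HC HG) as [DI].
    assert (HlE : lc_t 0 (subst_t g E)) by (destruct HG as [Hl _]; apply (proj1 (lc_subst_all g Hl)); eapply typing_lc; eauto).
    simpl in *. apply YRed; auto.
    + ys.
    + simpl. intros [N HN]. eapply Red_circ_good; eauto.
    + split; simpl; auto.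
  -
    intros B E0 E1 t IH0 t0 IH1 HC Hf g HG.
    destruct (GSL_closed _ _ _ (T_iter ar B E0 E1 t t0) g HC HG) as [DI].
    assert (HlE0 : lc_t 0 (subst_t g E0)) by (destruct HG as [Hl _]; apply (proj1 (lc_subst_all g Hl)); eapply typing_lc; eauto).
    assert (HlE1 : lc_t 0 (subst_t g E1)) by (destruct HG as [Hl _]; apply (proj1 (lc_subst_all g Hl)); eapply typing_lc; eauto).
    simpl in *. apply Red_pi. split; [split; simpl; auto|]. split; [constructor; auto|].
    intros N HN.
    assert (HcN := Red_closed _ _ _ _ _ HN).
    apply Red_idx in HN. destruct HN as [_ [[DN] [kN HkN]]].
    match goal with |- Red (open_ty 0 N ?T) _ =>
      assert (Eq : open_ty 0 N T = TPi (TCirc (subst_t g E0)) (TPi (TCirc (subst_t g E1))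
         (TCirc (Op OPlus (subst_t g E0) (Op OTimes (Op OPlus (Num 1) (subst_t g E1)) N)))))
         by (simpl; rewrite !open_lc0_t by auto; auto) end.
    pose proof (T_app ar [] _ _ _ _ DI DN) as DIN. rewrite Eq in DIN. rewrite Eq.
    apply YRed; auto.
    + destruct HcN. ys.
    + simpl. intros [M0 HM0] [M1 HM1]. apply Red_circ_good in HM0; apply Red_circ_good in HM1.
      apply goodE_op; [auto|]. apply goodE_op; [apply goodE_op; [apply goodE_ev with (k := 1); constructor| auto]|].
      apply goodE_ev with (k := kN); auto.
    + apply closed_app; split; auto; split; simpl; auto.
  -
    intros B E t IH HC Hf g HG.
    destruct (GSL_closed _ _ _ (T_dmeas ar B E t) g HC HG) as [DI].
    assert (HlE : lc_t 0 (subst_t g E)) by (destruct HG as [Hl _]; apply (proj1 (lc_subst_all g Hl)); eapply typing_lc; eauto).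
    simpl in *. apply YRed; auto.
    + ys.
    + simpl; auto.
    + split; simpl; auto.
  -
    intros B M s t t0 IH t1 HC Hf g HG.
    eapply Red_conv; [| apply IH; auto]. destruct HG as [Hl _]. apply tyeq_subst; auto.
  - intros; simpl; auto.
  - intros; simpl; auto.
  -
    intros B E t IH Hy HC Hf g HG. simpl.
    specialize (IH HC Hf g HG). apply Red_idx in IH. destruct IH as [_ [_ [k Hk]]].
    eapply goodE_ev; eauto.
  -
    intros B x s t n n0 w IH0 w0 IH1 Hy HC Hf g HG. simpl.
    intros [N HN]. inversion Hy as [| E0 | a b Hlcb Hyb]; subst.
    assert (Hs : forall m, In m (fv_ty s) -> In m (map fst B)) by (intros; apply Hf; simpl; apply in_or_app; auto).
    destruct (Good_upd g B x s N HG HC n Hs HN) as [HG' HC'].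
    rewrite open_lc0_ty in IH1 by auto.
    assert (Hft : forall m, In m (fv_ty t) -> In m (map fst ((x, s) :: B))) by (intros; right; apply Hf; simpl; apply in_or_app; auto).
    specialize (IH1 Hyb HC' Hft _ HG').
    rewrite subst_upd_fresh_ty in IH1 by auto. auto.
Qed.

Lemma FL B M t (D : typing ar B M t) : CleanB B -> (forall n, In n (fv_t M) -> In n (map fst B)) ->
     forall g, Good g B -> Red (subst_ty g t) (subst_t g M).
Proof. intros; eapply (proj1 FL_all); eauto. Qed.

End FL.

Theorem corollary1 (G : Type) (ar : G -> nat) (dag : G -> G)
  (Hdag : forall g, ar (dag g) = ar g)
  (mprob : nat -> term G -> nat -> nat -> R)
  (E : term G) :
  closed E ->
  inhabited (typing ar nil E TIdx) ->
  (exists n, eval ar dag mprob E 1%R (Num n)) /\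
  (forall (B : base G) (M : term G) (s : ty G) (D : typing ar B M s) (r : ty G),
      tyeq r (TCirc E) -> occ_d r D ->
      exists n, eval ar dag mprob E 1%R (Num n)).
Proof.
  intros Hc [D].
  assert (H : exists n, eval ar dag mprob E 1%R (Num n)).
  { assert (HG : Good ar dag mprob FVar nil).
    { split; [intro; simpl; auto|]. split; auto. intros y s0 []. }
    assert (HC : @CleanB G nil) by (intros p []).
    assert (Hf : forall n, In n (fv_t E) -> In n (map fst (@nil (nat * ty G)))).
    { destruct Hc as [Hc _]; rewrite Hc; intros n []. }
    pose proof (FL ar dag mprob nil E TIdx D HC Hf FVar HG) as HR.
    rewrite (proj1 subst_var_all) in HR. simpl in HR.
    apply Red_idx in HR. destruct HR as [_ [_ HR]]. exact HR. }
  split; auto.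
Qed.
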